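(* Let $A=\bigoplus_{i\in\mathbb{Z}}A_i$ be a pre-CP ring, and let $\psi:A_{-1}\otimes_{A_0}A_1\to A_0$ be given by $\psi(a\otimes b)=ab$. Then $(A_{-1},A_1,\psi)$ is an s-unital $A_0$-system satisfying Condition (FS), its Cuntz–Pimsner ring $\mathcal{O}_{(A_{-1},A_1,\psi)}$ is well-defined, the tuple $(i_{A_{-1}},i_{A_1},i_{A_0},A)$ of inclusion maps is a surjective covariant representation, and $$(i_{A_{-1}},i_{A_1},i_{A_0},A)\cong_r(\iota^{CP}_{A_{-1}},\iota^{CP}_{A_1},\iota^{CP}_{A_0},\mathcal{O}_{(A_{-1},A_1,\psi)}).$$ In particular $A\cong_{\mathrm{gr}}\mathcal{O}_{(A_{-1},A_1,\psi)}$, and this covariant representation is semi-full.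
   Context: Rings are associative, not necessarily unital. For additive subsets $X,Y$ of a ring, $XY$ is the additive subgroup generated by products, and $X^n$ similarly. A bimodule ${}_AM_B$ is s-unital if for each $x\in M$ there are $a\in A,b\in B$ with $ax=x=xb$; a ring is s-unital if it is s-unital as a bimodule over itself. A $\mathbb{Z}$-graded ring $A$ is nearly epsilon-strongly graded if each $A_i$ is an s-unital $A_iA_{-i}$-$A_{-i}A_i$-bimodule; semi-saturated if $A_n=(A_1)^n$, $A_{-n}=(A_{-1})^n$ for $n>0$. $\mathrm{Ann}_{A_0}(A_1)=\{r\in A_0:rA_1=0\}$ and for an ideal $J$ of $A_0$, $J^\perp=\{r\in A_0:rx=xr=0\ \forall x\in J\}$. $A$ is pre-CP if it is semi-saturated, nearly epsilon-strongly graded and $\mathrm{Ann}_{A_0}(A_1)\cap\mathrm{Ann}_{A_0}(A_1)^\perp=\{0\}$. An $R$-system is a triple $(P,Q,\psi)$ with $P,Q$ $R$-bimodules and $\psi:P\otimes_RQ\to R$ an $R$-bimodule homomorphism; it is s-unital if $R$ is s-unital and $P,Q$ are s-unital $R$-$R$-bimodules. Put $P^{\otimes0}=Q^{\otimes0}=R$, $\psi_0(r\otimes r')=rr'$, $\psi_1=\psi$, $Q^{\otimes n}=Q^{\otimes(n-1)}\otimes_RQ$, $P^{\otimes n}=P\otimes_RP^{\otimes(n-1)}$, $\psi_n((p_1\otimes p_2)\otimes(q_2\otimes q_1))=\psi(p_1\psi_{n-1}(p_2\otimes q_2)\otimes q_1)$. A covariant representation is a tuple $(S,T,\sigma,B)$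 with $B$ a ring, $S:P\to B$, $T:Q\to B$ additive, $\sigma:R\to B$ a ring homomorphism, with $S(pr)=S(p)\sigma(r)$, $S(rp)=\sigma(r)S(p)$, $T(qr)=T(q)\sigma(r)$, $T(rq)=\sigma(r)T(q)$, $\sigma(\psi(p\otimes q))=S(p)T(q)$. It is surjective if $B$ is generated as a ring by $\sigma(R)\cup S(P)\cup T(Q)$, graded if moreover $B$ is $\mathbb{Z}$-graded with $\sigma(R)\subseteq B_0$, $T(Q)\subseteq B_1$, $S(P)\subseteq B_{-1}$. For graded ones, $I^{(k)}_{\psi,\sigma}$ is the ideal of $B_0$ generated by $\{\sigma(\psi_k(p\otimes q)):p\in P^{\otimes k},q\in Q^{\otimes k}\}$, and the representation is semi-full if $B_{-k}B_k=I^{(k)}_{\psi,\sigma}$ for all $k\ge0$. A morphism $(S,T,\sigma,B)\to(S',T',\sigma',B')$ is a ring homomorphism $\phi:B\to B'$ with $\phi S=S'$, $\phi T=T'$, $\phi\sigma=\sigma'$; $\cong_r$ is isomorphism in this category. $\theta_{q,p}(x)=q\psi(p\otimes x)$ on $Q$, $\theta_{p,q}(y)=\psi(y\otimes q)p$ on $P$; $\mathcal{F}_P(Q)$, $\mathcal{F}_Q(P)$ are the additive groups they generate. Condition (FS): for all finite sets $\{q_i\}\subseteq Q$, $\{p_j\}\subseteq P$ there are $\Theta\in\mathcal{F}_P(Q)$, $\Phi\in\mathcal{F}_Q(P)$ fixing each $q_i$, resp. $p_j$. $\Delta(r)(q)=rq$. Under (FS), each covariant representation gives a unique ring homomorphism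 $\pi_{T,S}:\mathcal{F}_P(Q)\to B$ with $\theta_{q,p}\mapsto T(q)S(p)$. The Toeplitz representation $(\iota_P,\iota_Q,\iota_R,\mathcal{T}_{(P,Q,\psi)})$ is the universal covariant representation, graded with $\mathcal{T}_i$ generated additively by $\iota_Q^m(q)\iota_P^n(p)$ and $\iota_R(r)\iota_Q^m(q)\iota_P^n(p)$, $q\in Q^{\otimes m},p\in P^{\otimes n}$, $m-n=i$. An ideal $J\subseteq R$ is $\psi$-compatible if $\Delta(J)\subseteq\mathcal{F}_P(Q)$ and faithful if $J\cap\ker\Delta=0$; $\mathcal{T}(J)$ is the ideal generated by $\iota_R(x)-\pi_{\iota_Q,\iota_P}(\Delta(x))$, $x\in J$, and $\mathcal{O}(J)=\mathcal{T}/\mathcal{T}(J)$ with quotient map $\rho$, quotient grading, and representation $(\rho\iota_P,\rho\iota_Q,\rho\iota_R,\mathcal{O}(J))$. If a unique maximal $\psi$-compatible faithful ideal $J$ exists, the Cuntz–Pimsner ring $\mathcal{O}_{(P,Q,\psi)}=\mathcal{O}(J)$ is well-defined, with Cuntz–Pimsner representation $(\iota^{CP}_P,\iota^{CP}_Q,\iota^{CP}_R,\mathcal{O}_{(P,Q,\psi)})$ the corresponding relative representation. *)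

(* Defs.v *)
From Stdlib Require Import ZArith List.
Import ListNotations.
Open Scope Z_scope.

Record nuring := NURing {
  car :> Type;
  rzero : car;
  radd : car -> car -> car;
  ropp : car -> car;
  rmul : car -> car -> car;
  raddA : forall x y z, radd x (radd y z) = radd (radd x y) z;
  raddC : forall x y, radd x y = radd y x;
  radd0r : forall x, radd rzero x = x;
  raddNr : forall x, radd (ropp x) x = rzero;
  rmulA : forall x y z, rmul x (rmul y z) = rmul (rmul x y) z;
  rmulDl : forall x y z, rmul (radd x y) z = radd (rmul x z) (rmul y z);
  rmulDr : forall x y z, rmul x (radd y z) = radd (rmul x y) (rmul x z)
}.
Arguments rzero {_}.
Arguments radd {_} _ _.
Arguments ropp {_} _.
Arguments rmul {_} _ _.

Definition rsum {R : nuring} (l : list R) : R := fold_right radd rzero l.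

(* product x1 * ... * xm of a nonempty list (0 for the empty list, never used) *)
Fixpoint rprodne {R : nuring} (l : list R) : R :=
  match l with
  | [] => rzero
  | [x] => x
  | x :: l' => rmul x (rprodne l')
  end.

Definition is_addsubgroup {R : nuring} (S : R -> Prop) : Prop :=
  S rzero /\ (forall x y, S x -> S y -> S (radd x y)) /\ (forall x, S x -> S (ropp x)).

Inductive addgen {R : nuring} (S : R -> Prop) : R -> Prop :=
| ag_in x : S x -> addgen S x
| ag_0 : addgen S rzero
| ag_add x y : addgen S x -> addgen S y -> addgen S (radd x y)
| ag_opp x : addgen S x -> addgen S (ropp x).

Inductive ringgen {R : nuring} (S : R -> Prop) : R -> Prop :=
| rg_in x : S x -> ringgen S x
| rg_0 : ringgen S rzero
| rg_add x y : ringgen S x -> ringgen S y -> ringgen S (radd x y)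
| rg_opp x : ringgen S x -> ringgen S (ropp x)
| rg_mul x y : ringgen S x -> ringgen S y -> ringgen S (rmul x y).

(* two-sided ideal of the subring Sub generated by S (S is assumed inside Sub) *)
Inductive idealgen {R : nuring} (Sub S : R -> Prop) : R -> Prop :=
| ig_in x : S x -> idealgen Sub S x
| ig_0 : idealgen Sub S rzero
| ig_add x y : idealgen Sub S x -> idealgen Sub S y -> idealgen Sub S (radd x y)
| ig_opp x : idealgen Sub S x -> idealgen Sub S (ropp x)
| ig_mull b x : Sub b -> idealgen Sub S x -> idealgen Sub S (rmul b x)
| ig_mulr b x : Sub b -> idealgen Sub S x -> idealgen Sub S (rmul x b).

Definition prodset {R : nuring} (X Y : R -> Prop) : R -> Prop :=
  addgen (fun a => exists x y, X x /\ Y y /\ a = rmul x y).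

Fixpoint pws {R : nuring} (X : R -> Prop) (n : nat) : R -> Prop :=
  match n with
  | O | S O => addgen X
  | S m => prodset (pws X m) X
  end.

Definition ringhom {R S : nuring} (f : R -> S) : Prop :=
  forall x y, f (radd x y) = radd (f x) (f y) /\ f (rmul x y) = rmul (f x) (f y).

Definition is_graded (A : nuring) (G : Z -> A -> Prop) : Prop :=
  (forall i, is_addsubgroup (G i)) /\
  (forall i j x y, G i x -> G j y -> G (i + j) (rmul x y)) /\
  (forall a, exists l : list (Z * A),
      NoDup (map fst l) /\ (forall p, In p l -> G (fst p) (snd p)) /\
      a = rsum (map snd l)) /\
  (forall l : list (Z * A),
      NoDup (map fst l) -> (forall p, In p l -> G (fst p) (snd p)) ->
      rsum (map snd l) = rzero -> forall p, In p l -> snd p = rzero).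

Definition s_unital_bimod {A : nuring} (L M Rt : A -> Prop) : Prop :=
  forall x, M x -> exists a b, L a /\ Rt b /\ rmul a x = x /\ rmul x b = x.

Definition nearly_eps_strong (A : nuring) (G : Z -> A -> Prop) : Prop :=
  forall i, s_unital_bimod (prodset (G i) (G (- i))) (G i) (prodset (G (- i)) (G i)).

Definition semi_saturated (A : nuring) (G : Z -> A -> Prop) : Prop :=
  forall n : nat, (0 < n)%nat -> forall x,
    (G (Z.of_nat n) x <-> pws (G 1) n x) /\ (G (- Z.of_nat n) x <-> pws (G (-1)) n x).

Definition annA1 {A : nuring} (G : Z -> A -> Prop) (r : A) : Prop :=
  G 0 r /\ forall x, G 1 x -> rmul r x = rzero.

Definition perp {A : nuring} (G : Z -> A -> Prop) (J : A -> Prop) (r : A) : Prop :=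
  G 0 r /\ forall x, J x -> rmul r x = rzero /\ rmul x r = rzero.

Definition pre_CP (A : nuring) (G : Z -> A -> Prop) : Prop :=
  is_graded A G /\ semi_saturated A G /\ nearly_eps_strong A G /\
  (forall r, annA1 G r -> perp G (annA1 G) r -> r = rzero).

(* ---------- R-systems (P,Q,psi) with R,P,Q inside a ring A ----------
   R is a subring of A; P,Q are R-bimodules whose actions are multiplication
   in A; psi p q denotes psi(p (x) q) on elementary tensors. *)
Definition is_subring {A : nuring} (R : A -> Prop) : Prop :=
  is_addsubgroup R /\ forall x y, R x -> R y -> R (rmul x y).

Definition is_bimodule {A : nuring} (R M : A -> Prop) : Prop :=
  is_addsubgroup M /\ forall r m, R r -> M m -> M (rmul r m) /\ M (rmul m r).

(* psi : P x Q -> R is biadditive and R-balanced (hence defines a map on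
   P (x)_R Q) and the induced map is an R-bimodule homomorphism. *)
Definition is_system {A : nuring} (R P Q : A -> Prop) (psi : A -> A -> A) : Prop :=
  is_subring R /\ is_bimodule R P /\ is_bimodule R Q /\
  (forall p q, P p -> Q q -> R (psi p q)) /\
  (forall p p' q, P p -> P p' -> Q q -> psi (radd p p') q = radd (psi p q) (psi p' q)) /\
  (forall p q q', P p -> Q q -> Q q' -> psi p (radd q q') = radd (psi p q) (psi p q')) /\
  (forall p r q, P p -> R r -> Q q -> psi (rmul p r) q = psi p (rmul r q)) /\
  (forall r p q, R r -> P p -> Q q -> psi (rmul r p) q = rmul r (psi p q)) /\
  (forall p q r, P p -> Q q -> R r -> psi p (rmul q r) = rmul (psi p q) r).

Definition s_unital_system {A : nuring} (R P Q : A -> Prop) : Prop :=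
  s_unital_bimod R R R /\ s_unital_bimod R P R /\ s_unital_bimod R Q R.

(* an element sum_k theta_{q_k,p_k} of F_P(Q), given by the list of (q_k,p_k) *)
Definition thetaQ {A : nuring} (psi : A -> A -> A) (l : list (A * A)) (x : A) : A :=
  rsum (map (fun t => rmul (fst t) (psi (snd t) x)) l).
(* an element sum_k theta_{p_k,q_k} of F_Q(P), given by the list of (p_k,q_k) *)
Definition thetaP {A : nuring} (psi : A -> A -> A) (l : list (A * A)) (y : A) : A :=
  rsum (map (fun t => rmul (psi y (snd t)) (fst t)) l).

Definition cond_FS {A : nuring} (P Q : A -> Prop) (psi : A -> A -> A) : Prop :=
  forall (qs ps : list A), Forall Q qs -> Forall P ps ->
  exists (Th Ph : list (A * A)),
    (forall t, In t Th -> Q (fst t) /\ P (snd t)) /\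
    (forall t, In t Ph -> P (fst t) /\ Q (snd t)) /\
    (forall q, In q qs -> thetaQ psi Th q = q) /\
    (forall p, In p ps -> thetaP psi Ph p = p).

(* psi_n on an elementary tensor (p1 (x) ... (x) pn) (x) (x1 (x) ... (x) xn),
   n >= 1; the argument qs is the reversed list [xn; ...; x1] so that
   psi_n((p1(x)p')(x)(q'(x)q1)) = psi(p1 psi_{n-1}(p'(x)q') (x) q1) with q1 = xn. *)
Fixpoint psiE_rev {A : nuring} (psi : A -> A -> A) (ps qs : list A) : A :=
  match ps, qs with
  | [p], [q] => psi p q
  | p :: ps', q :: qs' => psi (rmul p (psiE_rev psi ps' qs')) q
  | _, _ => rzero
  end.
Definition psiE {A : nuring} (psi : A -> A -> A) (ps xs : list A) : A :=
  psiE_rev psi ps (rev xs).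

Record rep (A : nuring) := Rep {
  rB : nuring;
  rS : A -> rB;
  rT : A -> rB;
  rsig : A -> rB
}.
Arguments rB {_} _.
Arguments rS {_} _ _.
Arguments rT {_} _ _.
Arguments rsig {_} _ _.

Definition is_covrep {A : nuring} (R P Q : A -> Prop) (psi : A -> A -> A)
  (c : rep A) : Prop :=
  (forall x y, R x -> R y ->
     rsig c (radd x y) = radd (rsig c x) (rsig c y) /\
     rsig c (rmul x y) = rmul (rsig c x) (rsig c y)) /\
  (forall p p', P p -> P p' -> rS c (radd p p') = radd (rS c p) (rS c p')) /\
  (forall q q', Q q -> Q q' -> rT c (radd q q') = radd (rT c q) (rT c q')) /\
  (forall p r, P p -> R r ->
     rS c (rmul p r) = rmul (rS c p) (rsig c r) /\
     rS c (rmul r p) = rmul (rsig c r) (rS c p)) /\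
  (forall q r, Q q -> R r ->
     rT c (rmul q r) = rmul (rT c q) (rsig c r) /\
     rT c (rmul r q) = rmul (rsig c r) (rT c q)) /\
  (forall p q, P p -> Q q -> rsig c (psi p q) = rmul (rS c p) (rT c q)).

Definition rep_surjective {A : nuring} (R P Q : A -> Prop) (c : rep A) : Prop :=
  forall b : rB c, ringgen (fun b' => exists a,
      (R a /\ b' = rsig c a) \/ (P a /\ b' = rS c a) \/ (Q a /\ b' = rT c a)) b.

Definition rep_graded {A : nuring} (R P Q : A -> Prop) (c : rep A)
  (GB : Z -> rB c -> Prop) : Prop :=
  rep_surjective R P Q c /\ is_graded (rB c) GB /\
  (forall r, R r -> GB 0 (rsig c r)) /\
  (forall q, Q q -> GB 1 (rT c q)) /\
  (forall p, P p -> GB (-1) (rS c p)).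

(* generators of I^(k)_{psi,sigma} (elementary tensors suffice, since the
   ideal is closed under sums and sigma o psi_k is additive) *)
Definition gensI {A : nuring} (R P Q : A -> Prop) (psi : A -> A -> A)
  (c : rep A) (k : nat) (b : rB c) : Prop :=
  (k = 0%nat /\ exists r r', R r /\ R r' /\ b = rsig c (rmul r r')) \/
  ((0 < k)%nat /\ exists ps xs, length ps = k /\ length xs = k /\
     Forall P ps /\ Forall Q xs /\ b = rsig c (psiE psi ps xs)).

Definition semi_full {A : nuring} (R P Q : A -> Prop) (psi : A -> A -> A)
  (c : rep A) (GB : Z -> rB c -> Prop) : Prop :=
  forall (k : nat) (b : rB c),
    prodset (GB (- Z.of_nat k)) (GB (Z.of_nat k)) b <->
    idealgen (GB 0) (gensI R P Q psi c k) b.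

Definition rep_morphism {A : nuring} (R P Q : A -> Prop) (c d : rep A)
  (f : rB c -> rB d) : Prop :=
  ringhom f /\
  (forall p, P p -> f (rS c p) = rS d p) /\
  (forall q, Q q -> f (rT c q) = rT d q) /\
  (forall r, R r -> f (rsig c r) = rsig d r).

Definition rep_iso {A : nuring} (R P Q : A -> Prop) (c d : rep A) : Prop :=
  exists (f : rB c -> rB d) (g : rB d -> rB c),
    rep_morphism R P Q c d f /\ rep_morphism R P Q d c g /\
    (forall x, g (f x) = x) /\ (forall y, f (g y) = y).

Definition is_toeplitz {A : nuring} (R P Q : A -> Prop) (psi : A -> A -> A)
  (t : rep A) : Prop :=
  is_covrep R P Q psi t /\
  forall d : rep A, is_covrep R P Q psi d ->
    (exists f, rep_morphism R P Q t d f) /\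
    (forall f g, rep_morphism R P Q t d f -> rep_morphism R P Q t d g ->
                 forall x, f x = g x).

(* the grading of the Toeplitz ring: T_i is generated additively by
   iota_Q^m(q) iota_P^n(p) and iota_R(r) iota_Q^m(q) iota_P^n(p),
   q in Q^{(x)m}, p in P^{(x)n}, m - n = i (elementary tensors;
   iota_Q^0 = iota_P^0 = iota_R on Q^{(x)0} = P^{(x)0} = R). *)
Definition toep_Qpart {A : nuring} (R Q : A -> Prop) (t : rep A) (m : nat)
  (u : rB t) : Prop :=
  (m = 0%nat /\ exists r, R r /\ u = rsig t r) \/
  ((0 < m)%nat /\ exists xs, length xs = m /\ Forall Q xs /\
     u = rprodne (map (rT t) xs)).
Definition toep_Ppart {A : nuring} (R P : A -> Prop) (t : rep A) (n : nat)
  (v : rB t) : Prop :=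
  (n = 0%nat /\ exists r, R r /\ v = rsig t r) \/
  ((0 < n)%nat /\ exists ps, length ps = n /\ Forall P ps /\
     v = rprodne (map (rS t) ps)).
Definition toep_grading {A : nuring} (R P Q : A -> Prop) (t : rep A)
  (i : Z) : rB t -> Prop :=
  addgen (fun b => exists (m n : nat) u v,
     Z.of_nat m - Z.of_nat n = i /\ toep_Qpart R Q t m u /\ toep_Ppart R P t n v /\
     (b = rmul u v \/ exists r, R r /\ b = rmul (rsig t r) (rmul u v))).

Definition is_ideal_of {A : nuring} (R J : A -> Prop) : Prop :=
  (forall x, J x -> R x) /\ is_addsubgroup J /\
  (forall r x, R r -> J x -> J (rmul r x) /\ J (rmul x r)).

(* Delta(x) = sum_k theta_{q_k,p_k} in F_P(Q) *)
Definition Delta_repr {A : nuring} (P Q : A -> Prop) (psi : A -> A -> A)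
  (x : A) (l : list (A * A)) : Prop :=
  (forall t, In t l -> Q (fst t) /\ P (snd t)) /\
  (forall q, Q q -> rmul x q = thetaQ psi l q).

Definition psi_compatible {A : nuring} (P Q : A -> Prop) (psi : A -> A -> A)
  (J : A -> Prop) : Prop :=
  forall x, J x -> exists l, Delta_repr P Q psi x l.

Definition faithful_ideal {A : nuring} (Q : A -> Prop) (J : A -> Prop) : Prop :=
  forall x, J x -> (forall q, Q q -> rmul x q = rzero) -> x = rzero.

Definition good_ideal {A : nuring} (R P Q : A -> Prop) (psi : A -> A -> A)
  (J : A -> Prop) : Prop :=
  is_ideal_of R J /\ psi_compatible P Q psi J /\ faithful_ideal Q J.

Definition maximal_good_ideal {A : nuring} (R P Q : A -> Prop) (psi : A -> A -> A)
  (J : A -> Prop) : Prop :=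
  good_ideal R P Q psi J /\
  forall J', good_ideal R P Q psi J' -> (forall x, J x -> J' x) ->
             forall x, J' x -> J x.

Definition unique_maximal_good_ideal {A : nuring} (R P Q : A -> Prop)
  (psi : A -> A -> A) (J : A -> Prop) : Prop :=
  maximal_good_ideal R P Q psi J /\
  forall J', maximal_good_ideal R P Q psi J' -> forall x, J' x <-> J x.

(* T(J): the ideal of the Toeplitz ring generated by
   iota_R(x) - pi(Delta(x)), x in J *)
Definition TJ {A : nuring} (P Q : A -> Prop) (psi : A -> A -> A)
  (J : A -> Prop) (t : rep A) : rB t -> Prop :=
  idealgen (fun _ => True) (fun b => exists x l,
     J x /\ Delta_repr P Q psi x l /\
     b = radd (rsig t x)
              (ropp (rsum (map (fun u => rmul (rT t (fst u)) (rS t (snd u))) l)))).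

(* the relative representation on a quotient rho : T -> B' of T by an ideal *)
Definition quot_rep {A : nuring} (t : rep A) (B' : nuring) (rho : rB t -> B') : rep A :=
  Rep A B' (fun p => rho (rS t p)) (fun q => rho (rT t q)) (fun r => rho (rsig t r)).

Definition incl_rep (A : nuring) : rep A :=
  Rep A A (fun x => x) (fun x => x) (fun x => x).

Definition graded_iso (A B : nuring) (GA : Z -> A -> Prop) (GB : Z -> B -> Prop) : Prop :=
  exists (f : A -> B) (g : B -> A),
    ringhom f /\ ringhom g /\ (forall x, g (f x) = x) /\ (forall y, f (g y) = y) /\
    (forall i a, GA i a <-> GB i (f a)).

(* Main.v *)
Require Import Defs.
From Stdlib Require Import ZArith List Lia.
From Stdlib Require Import Classical ClassicalEpsilon ProofIrrelevance.
Import ListNotations.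
Open Scope Z_scope.

Section RingLemmas.
Context {R : nuring}.

Lemma radd0 (x : R) : radd x rzero = x.
Proof. rewrite raddC. apply radd0r. Qed.
Lemma raddN (x : R) : radd x (ropp x) = rzero.
Proof. rewrite raddC. apply raddNr. Qed.
Lemma radd_cancel_l (a b c : R) : radd a b = radd a c -> b = c.
Proof.
  intro H. assert (radd (ropp a) (radd a b) = radd (ropp a) (radd a c)) by (rewrite H; reflexivity).
  rewrite !raddA, raddNr, !radd0r in H0. exact H0.
Qed.
Lemma radd_eq0_opp (a b : R) : radd a b = rzero -> b = ropp a.
Proof. intro H. apply (radd_cancel_l a). rewrite H, raddN. reflexivity. Qed.
Lemma rmul0r (x : R) : rmul rzero x = rzero.
Proof.
  apply (radd_cancel_l (rmul rzero x)). rewrite <- rmulDl, radd0r, radd0. reflexivity.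
Qed.
Lemma rmulr0 (x : R) : rmul x rzero = rzero.
Proof.
  apply (radd_cancel_l (rmul x rzero)). rewrite <- rmulDr, radd0r, radd0. reflexivity.
Qed.
Lemma ropp_mul_l (x y : R) : rmul (ropp x) y = ropp (rmul x y).
Proof. apply radd_eq0_opp. rewrite <- rmulDl, raddN, rmul0r. reflexivity. Qed.
Lemma ropp_mul_r (x y : R) : rmul x (ropp y) = ropp (rmul x y).
Proof. apply radd_eq0_opp. rewrite <- rmulDr, raddN, rmulr0. reflexivity. Qed.
Lemma ropp0 : ropp (@rzero R) = rzero.
Proof. symmetry. apply radd_eq0_opp. apply radd0. Qed.
Lemma ropp_opp (x : R) : ropp (ropp x) = x.
Proof. symmetry. apply radd_eq0_opp. apply raddNr. Qed.
Lemma ropp_add (x y : R) : ropp (radd x y) = radd (ropp x) (ropp y).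
Proof.
  symmetry. apply radd_eq0_opp.
  rewrite (raddC _ (ropp x)), raddA, <- (raddA _ x y), raddN, radd0, raddN. reflexivity.
Qed.
Lemma radd_swap (a b c d : R) : radd (radd a b) (radd c d) = radd (radd a c) (radd b d).
Proof.
  rewrite <- !raddA. f_equal. rewrite !raddA. f_equal. apply raddC.
Qed.
Lemma rsub_eq0 (a b : R) : radd a (ropp b) = rzero -> a = b.
Proof.
  intro H. apply radd_eq0_opp in H. rewrite <- (ropp_opp a), <- H, ropp_opp. reflexivity.
Qed.

Lemma rsum_app (l1 l2 : list R) : rsum (l1 ++ l2) = radd (rsum l1) (rsum l2).
Proof.
  induction l1; cbn [app]. rewrite radd0r; reflexivity. unfold rsum in *. simpl. rewrite IHl1, raddA. reflexivity.
Qed.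
Lemma rsum_cons (x : R) l : rsum (x :: l) = radd x (rsum l).
Proof. reflexivity. Qed.
Lemma rsum_nil : rsum (@nil R) = rzero.
Proof. reflexivity. Qed.
Lemma rsum_mul_l (x : R) (l : list R) : rmul x (rsum l) = rsum (map (rmul x) l).
Proof.
  induction l; cbn [map]. apply rmulr0. rewrite !rsum_cons, rmulDr, IHl. reflexivity.
Qed.
Lemma rsum_mul_r (x : R) (l : list R) : rmul (rsum l) x = rsum (map (fun y => rmul y x) l).
Proof.
  induction l; cbn [map]. apply rmul0r. rewrite !rsum_cons, rmulDl, IHl. reflexivity.
Qed.
Lemma rsum_map_add {T} (f g : T -> R) (l : list T) :
  rsum (map (fun x => radd (f x) (g x)) l) = radd (rsum (map f l)) (rsum (map g l)).
Proof.
  induction l; cbn [map]. rewrite rsum_nil, radd0r; reflexivity.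
  rewrite !rsum_cons, IHl, radd_swap. reflexivity.
Qed.
Lemma rsum_map_opp {T} (f : T -> R) (l : list T) :
  rsum (map (fun x => ropp (f x)) l) = ropp (rsum (map f l)).
Proof.
  induction l; cbn [map]. rewrite rsum_nil, ropp0; reflexivity.
  rewrite !rsum_cons, IHl, ropp_add. reflexivity.
Qed.
Lemma rsum_map_ext {T} (f g : T -> R) (l : list T) :
  (forall x, In x l -> f x = g x) -> rsum (map f l) = rsum (map g l).
Proof.
  intro H. induction l; cbn [map]. reflexivity. rewrite !rsum_cons, H, IHl. reflexivity.
  intros; apply H; right; auto. left; auto.
Qed.
Lemma rsum_map_zero {T} (f : T -> R) (l : list T) :
  (forall x, In x l -> f x = rzero) -> rsum (map f l) = rzero.
Proof.
  intro H. induction l; cbn [map]. reflexivity. rewrite rsum_cons, H, IHl, radd0r. reflexivity.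
  intros; apply H; right; auto. left; auto.
Qed.

Lemma subgroup_rsum (S : R -> Prop) (l : list R) :
  is_addsubgroup S -> (forall x, In x l -> S x) -> S (rsum l).
Proof.
  intros [H0 [Ha Ho]] H. induction l; cbn [map]. exact H0.
  apply Ha. apply H; left; auto. apply IHl. intros; apply H; right; auto.
Qed.

End RingLemmas.

Lemma addmap_0 {R S : nuring} (f : R -> S) (D : R -> Prop) :
  is_addsubgroup D -> (forall x y, D x -> D y -> f (radd x y) = radd (f x) (f y)) ->
  f rzero = rzero.
Proof.
  intros [H0 _] H. apply (radd_cancel_l (f rzero)). rewrite <- H by auto. rewrite !radd0. reflexivity.
Qed.
Lemma addmap_opp {R S : nuring} (f : R -> S) (D : R -> Prop) :
  is_addsubgroup D -> (forall x y, D x -> D y -> f (radd x y) = radd (f x) (f y)) ->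
  forall x, D x -> f (ropp x) = ropp (f x).
Proof.
  intros HD H x Hx. apply radd_eq0_opp. rewrite <- H. rewrite raddN. eapply addmap_0; eauto.
  auto. destruct HD as [_ [_ Ho]]; auto.
Qed.
Lemma addmap_rsum {R S : nuring} {T} (f : R -> S) (D : R -> Prop) (g : T -> R) (l : list T) :
  is_addsubgroup D -> (forall x y, D x -> D y -> f (radd x y) = radd (f x) (f y)) ->
  (forall x, In x l -> D (g x)) ->
  f (rsum (map g l)) = rsum (map (fun x => f (g x)) l).
Proof.
  intros HD H Hl. induction l; cbn [map]. eapply addmap_0; eauto.
  rewrite !rsum_cons. rewrite H. rewrite IHl. reflexivity.
  intros; apply Hl; right; auto. apply Hl; left; auto.
  apply subgroup_rsum; auto. intros y Hy. apply in_map_iff in Hy. destruct Hy as [z [<- Hz]]. apply Hl; right; auto.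
Qed.
Lemma ringhom_0 {R S : nuring} (f : R -> S) : ringhom f -> f rzero = rzero.
Proof.
  intro H. apply (radd_cancel_l (f rzero)). rewrite <- (proj1 (H _ _)). rewrite !radd0. reflexivity.
Qed.
Lemma ringhom_opp {R S : nuring} (f : R -> S) : ringhom f -> forall x, f (ropp x) = ropp (f x).
Proof.
  intros H x. apply radd_eq0_opp. rewrite <- (proj1 (H _ _)), raddN. apply ringhom_0; auto.
Qed.
Lemma ringhom_rsum {R S : nuring} (f : R -> S) (l : list R) : ringhom f -> f (rsum l) = rsum (map f l).
Proof.
  intro H. induction l; cbn [map]. apply ringhom_0; auto. rewrite !rsum_cons, (proj1 (H _ _)), IHl. reflexivity.
Qed.

Section Gen.
Context {R : nuring}.

Lemma addgen_ind2 (S P : R -> Prop) :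
  P rzero -> (forall x y, P x -> P y -> P (radd x y)) -> (forall x, P x -> P (ropp x)) ->
  (forall x, S x -> P x) -> forall x, addgen S x -> P x.
Proof. intros H0 Ha Ho Hs x H. induction H; auto. Qed.

Lemma addgen_sub (S T : R -> Prop) : is_addsubgroup T -> (forall x, S x -> T x) ->
  forall x, addgen S x -> T x.
Proof. intros [H0 [Ha Ho]] HS. apply addgen_ind2; auto. Qed.

Lemma addgen_mono (S T : R -> Prop) : (forall x, S x -> T x) -> forall x, addgen S x -> addgen T x.
Proof. intros H x Hx. induction Hx. apply ag_in; auto. apply ag_0. apply ag_add; auto. apply ag_opp; auto. Qed.

Lemma addgen_subgroup (S : R -> Prop) : is_addsubgroup (addgen S).
Proof. split; [apply ag_0|split]; [apply ag_add|apply ag_opp]. Qed.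

Lemma prodset_list (X Y : R -> Prop) (z : R) :
  is_addsubgroup X -> prodset X Y z ->
  exists l : list (R * R), (forall t, In t l -> X (fst t) /\ Y (snd t)) /\
    z = rsum (map (fun t => rmul (fst t) (snd t)) l).
Proof.
  intros HX H. induction H.
  - destruct H as [x0 [y0 [Hx [Hy ->]]]]. exists [(x0,y0)]. split.
    intros t [<-|[]]; auto. cbn. rewrite radd0. reflexivity.
  - exists []. split. intros t []. reflexivity.
  - destruct IHaddgen1 as [l1 [H1 ->]]. destruct IHaddgen2 as [l2 [H2 ->]].
    exists (l1 ++ l2). split. intros t Ht. apply in_app_or in Ht. destruct Ht; auto.
    rewrite map_app, rsum_app. reflexivity.
  - destruct IHaddgen as [l [H1 ->]]. exists (map (fun t => (ropp (fst t), snd t)) l). split.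
    intros t Ht. apply in_map_iff in Ht. destruct Ht as [u [<- Hu]]. cbn. destruct (H1 u Hu).
    split; auto. destruct HX as [_ [_ Ho]]; auto.
    rewrite map_map. cbn. rewrite <- rsum_map_opp. f_equal. apply map_ext. intro; symmetry; apply ropp_mul_l.
Qed.

Lemma prodset_in (X Y : R -> Prop) x y : X x -> Y y -> prodset X Y (rmul x y).
Proof. intros. apply ag_in. exists x, y. auto. Qed.

Lemma prodset_mul (X Y : R -> Prop) a b :
  (forall x y x', X x -> Y y -> X x' -> X (rmul (rmul x y) x')) ->
  prodset X Y a -> prodset X Y b -> prodset X Y (rmul a b).
Proof.
  intros HX Ha Hb.
  assert (Hbase : forall x0 y0, X x0 -> Y y0 -> prodset X Y (rmul (rmul x0 y0) b)).
  { intros x0 y0 Hx Hy. clear Ha. induction Hb.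
    + destruct H as [x1 [y1 [Hx1 [Hy1 ->]]]]. rewrite rmulA. apply prodset_in; auto.
    + rewrite rmulr0. apply ag_0.
    + rewrite rmulDr. apply ag_add; auto.
    + rewrite ropp_mul_r. apply ag_opp; auto. }
  induction Ha.
  - destruct H as [x0 [y0 [Hx [Hy ->]]]]. auto.
  - rewrite rmul0r. apply ag_0.
  - rewrite rmulDl. apply ag_add; auto.
  - rewrite ropp_mul_l. apply ag_opp; auto.
Qed.

Lemma common_left_unit (L M : R -> Prop) :
  is_addsubgroup L -> (forall a b, L a -> L b -> L (rmul a b)) ->
  is_addsubgroup M -> (forall a m, L a -> M m -> M (rmul a m)) ->
  (forall m, M m -> exists e, L e /\ rmul e m = m) ->
  forall ms, (forall m, In m ms -> M m) -> exists e, L e /\ forall m, In m ms -> rmul e m = m.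
Proof.
  intros HL HLm HM HLM Hu ms. induction ms as [|m ms IH]; intros Hms.
  - exists rzero. split. apply HL. intros m [].
  - destruct IH as [e1 [He1 H1]]. intros; apply Hms; right; auto.
    assert (Mm : M m) by (apply Hms; left; auto).
    set (m' := radd m (ropp (rmul e1 m))).
    assert (Mm' : M m'). { destruct HM as [_ [Ha Ho]]. apply Ha; auto. }
    destruct (Hu m' Mm') as [e2 [He2 H2]].
    exists (radd (radd e1 e2) (ropp (rmul e2 e1))). split.
    + destruct HL as [_ [Ha Ho]]. apply Ha. apply Ha; auto. apply Ho; auto.
    + intros x [<-|Hx].
      * rewrite !rmulDl, ropp_mul_l, <- rmulA.
        rewrite <- raddA. rewrite <- ropp_mul_r, <- rmulDr. fold m'. rewrite H2. unfold m'.
        rewrite raddC, <- raddA, raddNr, radd0. reflexivity.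
      * rewrite !rmulDl, ropp_mul_l, <- rmulA, H1 by auto. rewrite <- raddA, raddN, radd0. reflexivity.
Qed.

Lemma common_right_unit (L M : R -> Prop) :
  is_addsubgroup L -> (forall a b, L a -> L b -> L (rmul a b)) ->
  is_addsubgroup M -> (forall a m, L a -> M m -> M (rmul m a)) ->
  (forall m, M m -> exists e, L e /\ rmul m e = m) ->
  forall ms, (forall m, In m ms -> M m) -> exists e, L e /\ forall m, In m ms -> rmul m e = m.
Proof.
  intros HL HLm HM HLM Hu ms. induction ms as [|m ms IH]; intros Hms.
  - exists rzero. split. apply HL. intros m [].
  - destruct IH as [e1 [He1 H1]]. intros; apply Hms; right; auto.
    assert (Mm : M m) by (apply Hms; left; auto).
    set (m' := radd m (ropp (rmul m e1))).
    assert (Mm' : M m'). { destruct HM as [_ [Ha Ho]]. apply Ha; auto. }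
    destruct (Hu m' Mm') as [e2 [He2 H2]].
    exists (radd (radd e1 e2) (ropp (rmul e1 e2))). split.
    + destruct HL as [_ [Ha Ho]]. apply Ha. apply Ha; auto. apply Ho; auto.
    + intros x [<-|Hx].
      * rewrite !rmulDr, ropp_mul_r, rmulA.
        rewrite <- raddA. rewrite <- ropp_mul_l, <- rmulDl. fold m'. rewrite H2. unfold m'.
        rewrite raddC, <- raddA, raddNr, radd0. reflexivity.
      * rewrite !rmulDr, ropp_mul_r, rmulA, H1 by auto. rewrite <- raddA, raddN, radd0. reflexivity.
Qed.

End Gen.

Section PreCP.
Context (A : nuring) (G : Z -> A -> Prop) (HP : pre_CP A G).

Lemma Hgr : is_graded A G. Proof. apply HP. Qed.
Lemma Gsub i : is_addsubgroup (G i). Proof. apply Hgr. Qed.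
Lemma G_0 i : G i rzero. Proof. apply Gsub. Qed.
Lemma G_add i x y : G i x -> G i y -> G i (radd x y). Proof. apply Gsub. Qed.
Lemma G_opp i x : G i x -> G i (ropp x). Proof. apply Gsub. Qed.
Lemma G_mul i j k x y : G i x -> G j y -> k = i + j -> G k (rmul x y).
Proof. intros Hx Hy ->. apply Hgr; auto. Qed.
Lemma G_rsum i l : (forall x, In x l -> G i x) -> G i (rsum l).
Proof. intros; apply subgroup_rsum; auto. apply Gsub. Qed.

Lemma prodsetG i j k z : prodset (G i) (G j) z -> k = i + j -> G k z.
Proof.
  intros H ->. revert z H. apply addgen_ind2. apply G_0. apply G_add. apply G_opp.
  intros x [a [b [Ha [Hb ->]]]]. eapply G_mul; eauto.
Qed.

Lemma nes : nearly_eps_strong A G. Proof. apply HP. Qed.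

Lemma unit0 x : G 0 x -> exists a b, G 0 a /\ G 0 b /\ rmul a x = x /\ rmul x b = x.
Proof.
  intro H. destruct (nes 0 x H) as [a [b [Ha [Hb [E1 E2]]]]]. exists a, b.
  repeat split; auto. eapply prodsetG; eauto. eapply prodsetG; eauto.
Qed.
Lemma unitQl q : G 1 q -> exists e, prodset (G 1) (G (-1)) e /\ rmul e q = q.
Proof. intro H. destruct (nes 1 q H) as [a [b [Ha [Hb [E1 E2]]]]]. exists a; auto. Qed.
Lemma unitQr q : G 1 q -> exists e, prodset (G (-1)) (G 1) e /\ rmul q e = q.
Proof. intro H. destruct (nes 1 q H) as [a [b [Ha [Hb [E1 E2]]]]]. exists b; auto. Qed.
Lemma unitPl p : G (-1) p -> exists e, prodset (G (-1)) (G 1) e /\ rmul e p = p.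
Proof. intro H. destruct (nes (-1) p H) as [a [b [Ha [Hb [E1 E2]]]]]. exists a; auto. Qed.
Lemma unitPr p : G (-1) p -> exists e, prodset (G 1) (G (-1)) e /\ rmul p e = p.
Proof. intro H. destruct (nes (-1) p H) as [a [b [Ha [Hb [E1 E2]]]]]. exists b; auto. Qed.

Lemma prod_closed i j : i + j + i = i ->
  forall a b, prodset (G i) (G j) a -> prodset (G i) (G j) b -> prodset (G i) (G j) (rmul a b).
Proof.
  intros Hij a b. apply prodset_mul. intros x y x' Hx Hy Hx'. eapply G_mul. eapply G_mul; eauto. eauto. lia.
Qed.

Lemma commonQl qs : (forall q, In q qs -> G 1 q) ->
  exists e, prodset (G 1) (G (-1)) e /\ forall q, In q qs -> rmul e q = q.
Proof.
  apply common_left_unit. apply addgen_subgroup. apply prod_closed; lia. apply Gsub.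
  intros a m Ha Hm. eapply G_mul. eapply prodsetG; eauto. eauto. lia. apply unitQl.
Qed.
Lemma commonPl ps : (forall p, In p ps -> G (-1) p) ->
  exists e, prodset (G (-1)) (G 1) e /\ forall p, In p ps -> rmul e p = p.
Proof.
  apply common_left_unit. apply addgen_subgroup. apply prod_closed; lia. apply Gsub.
  intros a m Ha Hm. eapply G_mul. eapply prodsetG; eauto. eauto. lia. apply unitPl.
Qed.
Lemma commonPr ps : (forall p, In p ps -> G (-1) p) ->
  exists e, prodset (G 1) (G (-1)) e /\ forall p, In p ps -> rmul p e = p.
Proof.
  apply common_right_unit. apply addgen_subgroup. apply prod_closed; lia. apply Gsub.
  intros a m Ha Hm. eapply G_mul. eauto. eapply prodsetG; eauto. lia. apply unitPr.
Qed.

Lemma ann_ideal_l r k : G 0 r -> annA1 G k -> annA1 G (rmul r k).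
Proof.
  intros Hr [Hk Hk']. split. eapply G_mul; eauto. intros x Hx. rewrite <- rmulA, Hk', rmulr0 by auto. reflexivity.
Qed.
Lemma ann_ideal_r r k : G 0 r -> annA1 G k -> annA1 G (rmul k r).
Proof.
  intros Hr [Hk Hk']. split. eapply G_mul; eauto. intros x Hx. rewrite <- rmulA, Hk'. reflexivity.
  eapply G_mul; eauto.
Qed.

Lemma Pann p k : G (-1) p -> annA1 G k -> rmul p k = rzero.
Proof.
  intros Hp [Hk Hk']. assert (Hpk : G (-1) (rmul p k)) by (eapply G_mul; eauto).
  destruct (unitPr _ Hpk) as [e [He E]]. rewrite <- E.
  clear E. induction He.
  - destruct H as [x0 [y0 [Hx0 [Hy0 ->]]]]. rewrite rmulA, <- (rmulA _ p k), Hk', rmulr0, !rmul0r by auto. reflexivity.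
  - apply rmulr0.
  - rewrite rmulDr, IHHe1, IHHe2, radd0. reflexivity.
  - rewrite ropp_mul_r, IHHe, ropp0. reflexivity.
Qed.

Lemma perp_qp q p : G 1 q -> G (-1) p -> perp G (annA1 G) (rmul q p).
Proof.
  intros Hq Hp. split. eapply G_mul; eauto. intros k Hk. split.
  - rewrite <- rmulA, (Pann p k), rmulr0; auto.
  - destruct Hk as [Hk Hk']. rewrite rmulA, Hk', rmul0r; auto.
Qed.

Lemma perp_subgroup : is_addsubgroup (perp G (annA1 G)).
Proof.
  split; [|split].
  - split. apply G_0. intros; rewrite rmul0r, rmulr0; auto.
  - intros x y [Hx Hx'] [Hy Hy']. split. apply G_add; auto. intros k Hk.
    destruct (Hx' k Hk), (Hy' k Hk). rewrite rmulDl, rmulDr, H, H0, H1, H2, radd0; auto.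
  - intros x [Hx Hx']. split. apply G_opp; auto. intros k Hk. destruct (Hx' k Hk).
    rewrite ropp_mul_l, ropp_mul_r, H, H0, ropp0; auto.
Qed.

Lemma perp_ann r : perp G (annA1 G) r -> annA1 G r -> r = rzero.
Proof. intros. apply HP; auto. Qed.

Lemma prodset_perp e : prodset (G 1) (G (-1)) e -> perp G (annA1 G) e.
Proof.
  apply addgen_sub. apply perp_subgroup. intros x [q [p [Hq [Hp ->]]]]. apply perp_qp; auto.
Qed.

Definition Jmax (x : A) : Prop :=
  perp G (annA1 G) x /\ exists l, Delta_repr (G (-1)) (G 1) rmul x l.

Lemma thetaQ_app (l1 l2 : list (A * A)) (y : A) : thetaQ rmul (l1 ++ l2) y = radd (thetaQ rmul l1 y) (thetaQ rmul l2 y).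
Proof. unfold thetaQ. rewrite map_app, rsum_app. reflexivity. Qed.

Lemma thetaQ_mul (l : list (A * A)) (y : A) : thetaQ rmul l y = rmul (rsum (map (fun t => rmul (fst t) (snd t)) l)) y.
Proof.
  unfold thetaQ. rewrite rsum_mul_r, map_map. f_equal. apply map_ext. intro. apply rmulA.
Qed.

Lemma Jmax_ideal : is_ideal_of (G 0) Jmax.
Proof.
  split; [|split; [split; [|split]|]].
  - intros x [[H _] _]; auto.
  - split. apply perp_subgroup. exists []. split. intros t []. intros q _. unfold thetaQ. cbn. apply rmul0r.
  - intros x y [Px [lx [Hlx Ex]]] [Py [ly [Hly Ey]]]. split. apply perp_subgroup; auto.
    exists (lx ++ ly). split. intros t Ht. apply in_app_or in Ht. destruct Ht; auto.
    intros q Hq. rewrite thetaQ_app, rmulDl, Ex, Ey; auto.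
  - intros x [Px [lx [Hlx Ex]]]. split. apply perp_subgroup; auto.
    exists (map (fun t => (ropp (fst t), snd t)) lx). split.
    + intros t Ht. apply in_map_iff in Ht. destruct Ht as [u [<- Hu]]. destruct (Hlx u Hu). split; auto. apply G_opp; auto.
    + intros q Hq. rewrite ropp_mul_l, Ex by auto. unfold thetaQ. rewrite map_map, <- rsum_map_opp.
      f_equal. apply map_ext. intro. cbn. symmetry. apply ropp_mul_l.
  - intros r x Hr [[Gx Px] [lx [Hlx Ex]]]. split.
    + split.
      * split. eapply G_mul; eauto. intros k Hk. destruct (Px k Hk) as [E1 E2]. split.
        rewrite <- rmulA, E1, rmulr0; auto.
        rewrite rmulA. destruct (Px _ (ann_ideal_r r k Hr Hk)). rewrite H0; auto.
      * exists (map (fun t => (rmul r (fst t), snd t)) lx). split.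
        intros t Ht. apply in_map_iff in Ht. destruct Ht as [u [<- Hu]]. destruct (Hlx u Hu). split; auto. cbn. eapply G_mul; eauto.
        intros q Hq. rewrite <- rmulA, Ex by auto. unfold thetaQ. rewrite rsum_mul_l, !map_map. f_equal. apply map_ext. intro. cbn. apply rmulA.
    + split.
      * split. eapply G_mul; eauto. intros k Hk. split.
        rewrite <- rmulA. destruct (Px _ (ann_ideal_l r k Hr Hk)). rewrite H; auto.
        rewrite rmulA. destruct (Px k Hk). rewrite H0, rmul0r; auto.
      * exists (map (fun t => (fst t, rmul (snd t) r)) lx). split.
        intros t Ht. apply in_map_iff in Ht. destruct Ht as [u [<- Hu]]. destruct (Hlx u Hu). split; auto. cbn. eapply G_mul; eauto.
        intros q Hq. rewrite <- rmulA, Ex. unfold thetaQ. rewrite !map_map. f_equal. apply map_ext. intro a. cbn. rewrite (rmulA _ (snd a) r q). reflexivity.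
        eapply G_mul; eauto.
Qed.

Lemma Jmax_good : good_ideal (G 0) (G (-1)) (G 1) rmul Jmax.
Proof.
  split. apply Jmax_ideal. split. intros x [_ H]; auto.
  intros x [Px _] Hx. apply perp_ann; auto. split; auto. apply Px.
Qed.

Lemma good_sub J : good_ideal (G 0) (G (-1)) (G 1) rmul J -> forall x, J x -> Jmax x.
Proof.
  intros [[HJR [HJs HJm]] [Hc Hf]] x Hx. split; [|apply Hc; auto].
  split. auto. intros k Hk. split.
  - apply Hf. apply (HJm k x (proj1 Hk) Hx). intros q Hq. rewrite <- rmulA. destruct Hk. rewrite H0, rmulr0; auto.
  - apply Hf. apply (HJm k x (proj1 Hk) Hx). intros q Hq. rewrite <- rmulA. destruct Hk. rewrite H0; auto.
    eapply G_mul. apply HJR; eauto. eauto. lia.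
Qed.

Lemma Jmax_unique : unique_maximal_good_ideal (G 0) (G (-1)) (G 1) rmul Jmax.
Proof.
  assert (M : maximal_good_ideal (G 0) (G (-1)) (G 1) rmul Jmax).
  { split. apply Jmax_good. intros J' HJ' _. apply good_sub; auto. }
  split. auto. intros J' [HJ' HM]. intro x. split. apply good_sub; auto.
  apply HM. apply Jmax_good. apply good_sub; auto.
Qed.

Lemma Jmax_qp q p : G 1 q -> G (-1) p -> Jmax (rmul q p) /\ Delta_repr (G (-1)) (G 1) rmul (rmul q p) [(q, p)].
Proof.
  intros Hq Hp. assert (D : Delta_repr (G (-1)) (G 1) rmul (rmul q p) [(q, p)]).
  { split. intros t [<-|[]]; auto. intros y Hy. unfold thetaQ. cbn. rewrite radd0, rmulA. reflexivity. }
  split; auto. split. apply perp_qp; auto. eauto.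
Qed.

End PreCP.

Section Prod.
Context {R : nuring}.
Lemma rprodne_cons (x : R) l : l <> [] -> rprodne (x :: l) = rmul x (rprodne l).
Proof. destruct l. congruence. reflexivity. Qed.
Lemma rprodne_app (l1 l2 : list R) : l1 <> [] -> l2 <> [] ->
  rprodne (l1 ++ l2) = rmul (rprodne l1) (rprodne l2).
Proof.
  intros H1 H2. induction l1 as [|x l1 IH]. congruence.
  destruct l1 as [|y l1']. cbn [app]. apply rprodne_cons; auto.
  rewrite <- app_comm_cons. rewrite rprodne_cons by (intro E; discriminate E).
  rewrite IH by discriminate. rewrite (rprodne_cons x (y :: l1')) by discriminate. apply rmulA.
Qed.
Lemma psiE_rev_eq (ps qs : list R) : length ps = length qs -> (1 <= length ps)%nat ->
  psiE_rev rmul ps qs = rmul (rprodne ps) (rprodne (rev qs)).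
Proof.
  revert qs. induction ps as [|p ps IH]; intros qs Hl H1. cbn in H1; lia.
  destruct qs as [|q qs]. discriminate.
  destruct ps as [|p' ps']. destruct qs; [|discriminate]. reflexivity.
  destruct qs as [|q' qs']. discriminate.
  change (psiE_rev rmul (p :: p' :: ps') (q :: q' :: qs')) with
    (rmul (rmul p (psiE_rev rmul (p' :: ps') (q' :: qs'))) q).
  rewrite IH by (cbn in *; lia).
  rewrite (rprodne_cons p) by discriminate.
  change (rev (q :: q' :: qs')) with (rev (q' :: qs') ++ [q]).
  rewrite rprodne_app. cbn [rprodne]. rewrite !rmulA. reflexivity.
  intro E. apply (f_equal (@length _)) in E. rewrite length_rev in E. discriminate. discriminate.
Qed.
Lemma psiE_eq (ps xs : list R) : length ps = length xs -> (1 <= length ps)%nat ->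
  psiE rmul ps xs = rmul (rprodne ps) (rprodne xs).
Proof.
  intros. unfold psiE. rewrite psiE_rev_eq, rev_involutive. reflexivity.
  rewrite length_rev; auto. auto.
Qed.

Lemma pws_list (X : R -> Prop) (k : nat) x : is_addsubgroup X -> (1 <= k)%nat -> pws X k x ->
  exists L : list (list R), (forall l, In l L -> length l = k /\ Forall X l) /\
    x = rsum (map rprodne L).
Proof.
  intros HX. revert x. induction k as [|k IH]; intros x Hk Hx. lia.
  destruct k as [|k].
  - cbn in Hx. assert (X x) by (eapply addgen_sub; eauto).
    exists [[x]]. split. intros l [<-|[]]. split; auto. cbn. rewrite radd0; reflexivity.
  - change (prodset (pws X (S k)) X x) in Hx. induction Hx.
    + destruct H as [a [b [Ha [Hb ->]]]]. destruct (IH a ltac:(lia) Ha) as [L [HL ->]].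
      exists (map (fun l => l ++ [b]) L). split.
      * intros l Hl. apply in_map_iff in Hl. destruct Hl as [l0 [<- Hl0]]. destruct (HL l0 Hl0).
        rewrite length_app, H. cbn. split. lia. apply Forall_app; auto.
      * rewrite rsum_mul_r, !map_map. apply rsum_map_ext. intros l Hl. rewrite rprodne_app. reflexivity.
        destruct (HL l Hl). intro E; subst; cbn in H; discriminate. discriminate.
    + exists []. split. intros l []. reflexivity.
    + destruct IHHx1 as [L1 [H1 ->]]. destruct IHHx2 as [L2 [H2 ->]]. exists (L1 ++ L2). split.
      intros l Hl. apply in_app_or in Hl. destruct Hl; auto. rewrite map_app, rsum_app. reflexivity.
    + destruct IHHx as [L [H1 ->]].
      exists (map (fun l => match l with [] => [] | a :: l' => ropp a :: l' end) L). split.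
      * intros l Hl. apply in_map_iff in Hl. destruct Hl as [l0 [<- Hl0]]. destruct (H1 l0 Hl0) as [E F].
        destruct l0. cbn in E; lia. inversion F; subst. split. auto. constructor; auto. apply HX; auto.
      * rewrite map_map, <- rsum_map_opp. apply rsum_map_ext. intros l Hl. destruct (H1 l Hl) as [E F].
        destruct l as [|a l]. cbn in E; lia. destruct l. reflexivity.
        rewrite !rprodne_cons by discriminate. rewrite (rprodne_cons (ropp a)) by discriminate. symmetry. apply ropp_mul_l.
Qed.

Lemma pws_ringgen (Sg X : R -> Prop) k x : (forall y, X y -> ringgen Sg y) -> pws X k x -> ringgen Sg x.
Proof.
  intro HX. assert (Hs : forall T y, (forall z, T z -> ringgen Sg z) -> addgen T y -> ringgen Sg y).
  { intros T y HT Hy. induction Hy. auto. apply rg_0. apply rg_add; auto. apply rg_opp; auto. }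
  revert x. induction k as [|k IH]; intros x Hx. apply (Hs X); auto.
  destruct k as [|k]. apply (Hs X); auto.
  apply (Hs (fun a => exists x y, pws X (Datatypes.S k) x /\ X y /\ a = rmul x y)); [|exact Hx]. intros z [a [b [Ha [Hb ->]]]]. apply rg_mul; auto.
Qed.
End Prod.

Section Part1.
Context (A : nuring) (G : Z -> A -> Prop) (HP : pre_CP A G).

Lemma ss : semi_saturated A G. Proof. apply HP. Qed.

Lemma homog_gen (S : A -> Prop) :
  (forall a, G 0 a -> S a) -> (forall a, G 1 a -> S a) -> (forall a, G (-1) a -> S a) ->
  forall n a, G n a -> ringgen S a.
Proof.
  intros H0 H1 Hm n a Ha. destruct n as [|p|p].
  - apply rg_in; auto.
  - assert (E : Z.pos p = Z.of_nat (Pos.to_nat p)) by lia. rewrite E in Ha.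
    apply (ss (Pos.to_nat p) ltac:(lia) a) in Ha. eapply pws_ringgen; [|exact Ha].
    intros; apply rg_in; auto.
  - assert (E : Z.neg p = - Z.of_nat (Pos.to_nat p)) by lia. rewrite E in Ha.
    apply (ss (Pos.to_nat p) ltac:(lia) a) in Ha. eapply pws_ringgen; [|exact Ha].
    intros; apply rg_in; auto.
Qed.

Lemma all_gen (S : A -> Prop) :
  (forall a, G 0 a -> S a) -> (forall a, G 1 a -> S a) -> (forall a, G (-1) a -> S a) ->
  forall a, ringgen S a.
Proof.
  intros H0 H1 Hm a. destruct (Hgr A G HP) as [_ [_ [Hd _]]]. destruct (Hd a) as [l [_ [Hl ->]]].
  clear Hd. induction l as [|p l IH]. apply rg_0. cbn [map]. rewrite rsum_cons. apply rg_add.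
  eapply homog_gen; eauto. apply Hl; left; auto. apply IH. intros; apply Hl; right; auto.
Qed.

Lemma part_system : is_system (G 0) (G (-1)) (G 1) rmul.
Proof.
  repeat split; intros; try apply G_0; try apply G_add; try apply G_opp; auto;
    try (eapply G_mul; eauto; lia); try apply rmulDl; try apply rmulDr; auto.
  all: try apply (Gsub A G HP); try (symmetry; apply rmulA); try apply rmulA.
Qed.

Lemma part_sunital : s_unital_system (G 0) (G (-1)) (G 1).
Proof.
  split; [|split].
  - intros x Hx. apply unit0; auto.
  - intros p Hp. destruct (nes A G HP (-1) p Hp) as [a [b [Ha [Hb [E1 E2]]]]]. exists a, b.
    repeat split; auto; eapply prodsetG; eauto.
  - intros q Hq. destruct (nes A G HP 1 q Hq) as [a [b [Ha [Hb [E1 E2]]]]]. exists a, b.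
    repeat split; auto; eapply prodsetG; eauto.
Qed.

Lemma part_FS : cond_FS (G (-1)) (G 1) rmul.
Proof.
  intros qs ps Hqs Hps. rewrite Forall_forall in Hqs, Hps.
  destruct (commonQl A G HP qs Hqs) as [e1 [He1 E1]].
  destruct (commonPr A G HP ps Hps) as [e2 [He2 E2]].
  destruct (prodset_list _ _ _ (Gsub A G HP 1) He1) as [l1 [Hl1 ->]].
  destruct (prodset_list _ _ _ (Gsub A G HP 1) He2) as [l2 [Hl2 ->]].
  exists l1, (map (fun t => (snd t, fst t)) l2). split; [|split; [|split]].
  - auto.
  - intros t Ht. apply in_map_iff in Ht. destruct Ht as [u [<- Hu]]. cbn. destruct (Hl2 u Hu); auto.
  - intros q Hq. rewrite thetaQ_mul. auto.
  - intros p Hp. rewrite <- (E2 p Hp) at 2. unfold thetaP. rewrite rsum_mul_l, !map_map.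
    apply rsum_map_ext. intros. cbn. symmetry. apply rmulA.
Qed.

Lemma part_covrep : is_covrep (G 0) (G (-1)) (G 1) rmul (incl_rep A).
Proof.
  repeat split; intros; cbn; auto.
Qed.

Lemma part_surj : rep_surjective (G 0) (G (-1)) (G 1) (incl_rep A).
Proof.
  intro b. apply all_gen; intros a Ha; exists a; cbn; auto.
Qed.

Lemma part_graded : rep_graded (G 0) (G (-1)) (G 1) (incl_rep A) G.
Proof.
  split. apply part_surj. split. apply Hgr; auto. cbn. auto.
Qed.

Lemma idealgen_subgroup (Sub S : A -> Prop) : is_addsubgroup (idealgen Sub S).
Proof. split; [apply ig_0|split]; [apply ig_add|apply ig_opp]. Qed.

Lemma rprodne_G (i : Z) (l : list A) : Forall (G i) l -> l <> [] ->
  G (i * Z.of_nat (length l)) (rprodne l).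
Proof.
  intros F. induction F as [|x l Hx F IH]; intros Hne. congruence.
  destruct l as [|y l]. cbn. replace (i * 1) with i by lia. auto.
  rewrite rprodne_cons by discriminate. eapply G_mul; eauto. apply IH. discriminate.
  cbn [length]. lia.
Qed.

Lemma part_semifull : semi_full (G 0) (G (-1)) (G 1) rmul (incl_rep A) G.
Proof.
  intros k b. cbn [rB incl_rep] in *. split.
  - intro H. induction H.
    + destruct H as [x0 [y0 [Hx [Hy ->]]]]. destruct k as [|k].
      * apply ig_in. left. split; auto. exists x0, y0. cbn. auto.
      * assert (Hx' := proj1 (proj2 (ss (S k) ltac:(lia) x0)) Hx).
        assert (Hy' := proj1 (proj1 (ss (S k) ltac:(lia) y0)) Hy).
        apply pws_list in Hx'; [|apply Gsub; auto|lia]. apply pws_list in Hy'; [|apply Gsub; auto|lia].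
        destruct Hx' as [L1 [H1 ->]]. destruct Hy' as [L2 [H2 ->]].
        rewrite rsum_mul_r, map_map. apply subgroup_rsum. apply idealgen_subgroup.
        intros z Hz. apply in_map_iff in Hz. destruct Hz as [l1 [<- Hl1]].
        rewrite rsum_mul_l, map_map. apply subgroup_rsum. apply idealgen_subgroup.
        intros z Hz. apply in_map_iff in Hz. destruct Hz as [l2 [<- Hl2]].
        apply ig_in. right. split. lia. exists l1, l2. destruct (H1 l1 Hl1), (H2 l2 Hl2).
        repeat split; auto. cbn. rewrite psiE_eq; auto. lia. lia.
    + apply ig_0.
    + apply ig_add; auto.
    + apply ig_opp; auto.
  - intro H. induction H.
    + destruct H as [[-> [r [r' [Hr [Hr' ->]]]]] | [Hk [ps [xs [Hl1 [Hl2 [F1 [F2 ->]]]]]]]].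
      * apply prodset_in; auto.
      * cbn. rewrite psiE_eq by lia. apply prodset_in.
        -- replace (- Z.of_nat k) with (-1 * Z.of_nat (length ps)) by lia. apply rprodne_G; auto.
           intro E; subst; cbn in Hk; lia.
        -- replace (Z.of_nat k) with (1 * Z.of_nat (length xs)) by lia. apply rprodne_G; auto.
           intro E; subst; cbn in *; lia.
    + apply ag_0.
    + apply ag_add; auto.
    + apply ag_opp; auto.
    + clear H0. induction IHidealgen.
      * destruct H0 as [x0 [y0 [Hx [Hy ->]]]]. rewrite rmulA. apply prodset_in; auto; eapply G_mul; eauto; lia.
      * rewrite rmulr0. apply ag_0.
      * rewrite rmulDr. apply ag_add; auto.
      * rewrite ropp_mul_r. apply ag_opp; auto.
    + clear H0. induction IHidealgen.
      * destruct H0 as [x0 [y0 [Hx [Hy ->]]]]. rewrite <- rmulA. apply prodset_in; auto; eapply G_mul; eauto; lia.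
      * rewrite rmul0r. apply ag_0.
      * rewrite rmulDl. apply ag_add; auto.
      * rewrite ropp_mul_l. apply ag_opp; auto.
Qed.

End Part1.

Section SubRing.
Context {T : nuring} (Sg : T -> Prop).

Definition SC := {x : T | ringgen Sg x}.
Lemma sc_eq (u v : SC) : proj1_sig u = proj1_sig v -> u = v.
Proof.
  destruct u as [u Hu], v as [v Hv]. cbn. intros ->. f_equal. apply proof_irrelevance.
Qed.
Definition sc0 : SC := exist _ rzero (rg_0 _).
Definition scadd (u v : SC) : SC := exist _ (radd (proj1_sig u) (proj1_sig v)) (rg_add _ _ _ (proj2_sig u) (proj2_sig v)).
Definition scopp (u : SC) : SC := exist _ (ropp (proj1_sig u)) (rg_opp _ _ (proj2_sig u)).
Definition scmul (u v : SC) : SC := exist _ (rmul (proj1_sig u) (proj1_sig v)) (rg_mul _ _ _ (proj2_sig u) (proj2_sig v)).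

Definition SubR : nuring.
Proof.
  refine (NURing SC sc0 scadd scopp scmul _ _ _ _ _ _ _); intros; apply sc_eq; cbn.
  apply raddA. apply raddC. apply radd0r. apply raddNr. apply rmulA. apply rmulDl. apply rmulDr.
Defined.
End SubRing.

Section Gen.
Context {A : nuring} (R P Q : A -> Prop) (psi : A -> A -> A) (HS : is_system R P Q psi).
Context (t : rep A) (Ht : is_toeplitz R P Q psi t).

Definition gensT (b : rB t) : Prop := exists a,
  (R a /\ b = rsig t a) \/ (P a /\ b = rS t a) \/ (Q a /\ b = rT t a).

Definition restr (D : A -> Prop) (F : A -> rB t) (H : forall a, D a -> ringgen gensT (F a)) (a : A) : SubR gensT :=
  match excluded_middle_informative (D a) with
  | left Ha => exist _ (F a) (H a Ha)
  | right _ => sc0 gensT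
  end.
Lemma restr_val D F H a : D a -> proj1_sig (restr D F H a) = F a.
Proof. intro Ha. unfold restr. destruct (excluded_middle_informative (D a)). reflexivity. contradiction. Qed.

Lemma gR a : R a -> ringgen gensT (rsig t a). Proof. intro. apply rg_in. exists a. auto. Qed.
Lemma gP a : P a -> ringgen gensT (rS t a). Proof. intro. apply rg_in. exists a. auto. Qed.
Lemma gQ a : Q a -> ringgen gensT (rT t a). Proof. intro. apply rg_in. exists a. auto. Qed.

Definition subrep : rep A :=
  Rep A (SubR gensT) (restr P (rS t) gP) (restr Q (rT t) gQ) (restr R (rsig t) gR).

Lemma toeplitz_gen : forall x : rB t, ringgen gensT x.
Proof.
  destruct HS as [[[R0 [Ra Ro]] Rm] [[[P0 [Pa Po]] Pm] [[[Q0 [Qa Qo]] Qm] [Hpsi _]]]].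
  pose proof Ht as Ht'. destruct Ht as [Hc Hu].
  destruct Hc as [C1 [C2 [C3 [C4 [C5 C6]]]]].
  assert (Hd : is_covrep R P Q psi subrep).
  { unfold subrep. repeat split; intros; apply sc_eq; cbn [rB rS rT rsig SubR car radd rmul scadd scmul proj1_sig];
      cbn; rewrite ?restr_val; auto.
    all: try (apply C1; auto); try (apply C2; auto); try (apply C3; auto);
         try (apply C4; auto); try (apply C5; auto); try (apply C6; auto).
    all: try apply Rm; auto; try apply Hpsi; auto.
    all: first [apply (proj1 (Pm _ _ ltac:(eassumption) ltac:(eassumption))) | apply (proj2 (Pm _ _ ltac:(eassumption) ltac:(eassumption)))
               | apply (proj1 (Qm _ _ ltac:(eassumption) ltac:(eassumption))) | apply (proj2 (Qm _ _ ltac:(eassumption) ltac:(eassumption)))]. }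
  destruct (Hu subrep Hd) as [[phi Hphi] _].
  assert (Hi : rep_morphism R P Q t t (fun x => proj1_sig (phi x))).
  { destruct Hphi as [Hh [H1 [H2 H3]]]. split; [|split; [|split]].
    - intros x y. destruct (Hh x y) as [E1 E2]. rewrite E1, E2. split; reflexivity.
    - intros p Hp. rewrite H1; auto. cbn. apply restr_val; auto.
    - intros p Hp. rewrite H2; auto. cbn. apply restr_val; auto.
    - intros p Hp. rewrite H3; auto. cbn. apply restr_val; auto. }
  assert (Hid : rep_morphism R P Q t t (fun x => x)).
  { split. intros x y; split; reflexivity. auto. }
  destruct (Hu t (proj1 Ht')) as [_ Hun].
  intro x. rewrite <- (Hun _ _ Hi Hid x). apply (proj2_sig (phi x)).
Qed.
End Gen.

Lemma sum_indicator {R : nuring} (D : list Z) (k : Z) (x : R) : NoDup D -> In k D ->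
  rsum (map (fun d => if Z.eqb k d then x else rzero) D) = x.
Proof.
  intros ND. induction ND as [|d D Hd ND IH]; intros Hk. destruct Hk.
  cbn [map]. rewrite rsum_cons. destruct (Z.eqb_spec k d).
  - subst. rewrite rsum_map_zero. apply radd0. intros d' Hd'. destruct (Z.eqb_spec d d'). subst; contradiction. reflexivity.
  - destruct Hk as [->|Hk]. congruence. rewrite IH; auto. apply radd0r.
Qed.

Lemma group_sum {R : nuring} {T} (dg : T -> Z) (F : T -> R) (cs : list T) (D : list Z) :
  NoDup D -> (forall c, In c cs -> In (dg c) D) ->
  rsum (map F cs) = rsum (map (fun d => rsum (map F (filter (fun c => Z.eqb (dg c) d) cs))) D).
Proof.
  intros ND. induction cs as [|c cs IH]; intros Hin.
  - symmetry. apply rsum_map_zero. intros; reflexivity.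
  - cbn [map]. rewrite rsum_cons, IH by (intros; apply Hin; right; auto).
    assert (E : forall d, rsum (map F (filter (fun c0 => Z.eqb (dg c0) d) (c :: cs))) =
       radd (if Z.eqb (dg c) d then F c else rzero) (rsum (map F (filter (fun c0 => Z.eqb (dg c0) d) cs)))).
    { intros d. cbn [filter]. destruct (Z.eqb (dg c) d). cbn [map]. reflexivity. rewrite radd0r. reflexivity. }
    rewrite (map_ext _ _ E).
    rewrite rsum_map_add, (sum_indicator D (dg c) (F c) ND (Hin c (or_introl eq_refl))). reflexivity.
Qed.

Lemma rprodne_cons_mul {R : nuring} (x y : R) l : rprodne (rmul x y :: l) = rmul x (rprodne (y :: l)).
Proof. destruct l. reflexivity. cbn [rprodne]. symmetry. apply rmulA. Qed.

Section Iso.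
Context (A : nuring) (G : Z -> A -> Prop) (HP : pre_CP A G).
Context (t : rep A) (Ht : is_toeplitz (G 0) (G (-1)) (G 1) rmul t).
Context (B' : nuring) (rho : rB t -> B') (Hrho : ringhom rho)
  (Hsurj : forall b : B', exists x, rho x = b)
  (Hker : forall x, rho x = rzero <-> TJ (G (-1)) (G 1) rmul (Jmax A G) t x).
Context (f : rB t -> A) (Hf : rep_morphism (G 0) (G (-1)) (G 1) t (incl_rep A) f).

Definition Sg (r : A) : B' := rho (rsig t r).
Definition Tq (q : A) : B' := rho (rT t q).
Definition Sp (p : A) : B' := rho (rS t p).

Lemma Hc : is_covrep (G 0) (G (-1)) (G 1) rmul t. Proof. apply Ht. Qed.
Lemma rho_add x y : rho (radd x y) = radd (rho x) (rho y). Proof. apply Hrho. Qed.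
Lemma rho_mul x y : rho (rmul x y) = rmul (rho x) (rho y). Proof. apply Hrho. Qed.

Lemma Sg_add r r' : G 0 r -> G 0 r' -> Sg (radd r r') = radd (Sg r) (Sg r').
Proof. intros. unfold Sg. rewrite (proj1 (proj1 Hc r r' H H0)). apply rho_add. Qed.
Lemma Sg_mul r r' : G 0 r -> G 0 r' -> Sg (rmul r r') = rmul (Sg r) (Sg r').
Proof. intros. unfold Sg. rewrite (proj2 (proj1 Hc r r' H H0)). apply rho_mul. Qed.
Lemma Tq_add q q' : G 1 q -> G 1 q' -> Tq (radd q q') = radd (Tq q) (Tq q').
Proof. intros. unfold Tq. rewrite (proj1 (proj2 (proj2 Hc)) q q' H H0). apply rho_add. Qed.
Lemma Sp_add p p' : G (-1) p -> G (-1) p' -> Sp (radd p p') = radd (Sp p) (Sp p').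
Proof. intros. unfold Sp. rewrite (proj1 (proj2 Hc) p p' H H0). apply rho_add. Qed.
Lemma SpSg p r : G (-1) p -> G 0 r -> rmul (Sp p) (Sg r) = Sp (rmul p r).
Proof. intros. unfold Sp, Sg. rewrite <- rho_mul. f_equal. symmetry. destruct Hc as [_ [_ [_ [C4 _]]]]. apply (proj1 (C4 p r H H0)). Qed.
Lemma SgSp r p : G 0 r -> G (-1) p -> rmul (Sg r) (Sp p) = Sp (rmul r p).
Proof. intros. unfold Sp, Sg. rewrite <- rho_mul. f_equal. symmetry. destruct Hc as [_ [_ [_ [C4 _]]]]. apply (proj2 (C4 p r H0 H)). Qed.
Lemma TqSg q r : G 1 q -> G 0 r -> rmul (Tq q) (Sg r) = Tq (rmul q r).
Proof. intros. unfold Tq, Sg. rewrite <- rho_mul. f_equal. symmetry. destruct Hc as [_ [_ [_ [_ [C5 _]]]]]. apply (proj1 (C5 q r H H0)). Qed.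
Lemma SgTq r q : G 0 r -> G 1 q -> rmul (Sg r) (Tq q) = Tq (rmul r q).
Proof. intros. unfold Tq, Sg. rewrite <- rho_mul. f_equal. symmetry. destruct Hc as [_ [_ [_ [_ [C5 _]]]]]. apply (proj2 (C5 q r H0 H)). Qed.
Lemma SpTq p q : G (-1) p -> G 1 q -> rmul (Sp p) (Tq q) = Sg (rmul p q).
Proof. intros. unfold Tq, Sp, Sg. rewrite <- rho_mul. f_equal. symmetry. destruct Hc as [_ [_ [_ [_ [_ C6]]]]]. apply (C6 p q H H0). Qed.

Lemma TqSp q p : G 1 q -> G (-1) p -> rmul (Tq q) (Sp p) = Sg (rmul q p).
Proof.
  intros Hq Hp. destruct (Jmax_qp A G HP q p Hq Hp) as [HJ HD].
  assert (E : rho (radd (rsig t (rmul q p))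
     (ropp (rsum (map (fun u => rmul (rT t (fst u)) (rS t (snd u))) [(q, p)])))) = rzero).
  { apply Hker. apply ig_in. exists (rmul q p), [(q, p)]. auto. }
  rewrite rho_add, (ringhom_opp _ Hrho) in E. cbn in E. rewrite radd0, rho_mul in E.
  symmetry. apply rsub_eq0. exact E.
Qed.

Lemma Sg_sub : forall x y, G 0 x -> G 0 y -> Sg (radd x y) = radd (Sg x) (Sg y). Proof. apply Sg_add. Qed.
Lemma Sg_0 : Sg rzero = rzero. Proof. eapply addmap_0. apply (Gsub A G HP 0). apply Sg_add. Qed.
Lemma Tq_0 : Tq rzero = rzero. Proof. eapply addmap_0. apply (Gsub A G HP 1). apply Tq_add. Qed.
Lemma Sp_0 : Sp rzero = rzero. Proof. eapply addmap_0. apply (Gsub A G HP (-1)). apply Sp_add. Qed.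
Lemma Sg_opp r : G 0 r -> Sg (ropp r) = ropp (Sg r). Proof. eapply addmap_opp. apply (Gsub A G HP 0). apply Sg_add. Qed.
Lemma Tq_opp r : G 1 r -> Tq (ropp r) = ropp (Tq r). Proof. eapply addmap_opp. apply (Gsub A G HP 1). apply Tq_add. Qed.
Lemma Sp_opp r : G (-1) r -> Sp (ropp r) = ropp (Sp r). Proof. eapply addmap_opp. apply (Gsub A G HP (-1)). apply Sp_add. Qed.

Lemma f_hom : ringhom f. Proof. apply Hf. Qed.
Lemma f_S p : G (-1) p -> f (rS t p) = p. Proof. apply Hf. Qed.
Lemma f_T q : G 1 q -> f (rT t q) = q. Proof. apply Hf. Qed.
Lemma f_sig r : G 0 r -> f (rsig t r) = r. Proof. apply Hf. Qed.

Lemma TJ_f x : TJ (G (-1)) (G 1) rmul (Jmax A G) t x -> f x = rzero.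
Proof.
  intro H. induction H.
  - destruct H as [x0 [l [HJ [[Hl HD] ->]]]].
    rewrite (proj1 (f_hom _ _)), (ringhom_opp _ f_hom), (ringhom_rsum _ _ f_hom), map_map.
    rewrite f_sig by (apply HJ).
    rewrite (rsum_map_ext _ (fun u => rmul (fst u) (snd u))).
    2:{ intros u Hu. rewrite (proj2 (f_hom _ _)), f_T, f_S; auto; apply Hl; auto. }
    set (s := rsum (map (fun u => rmul (fst u) (snd u)) l)).
    assert (Ps : perp G (annA1 G) s).
    { apply subgroup_rsum. apply perp_subgroup; auto. intros z Hz. apply in_map_iff in Hz.
      destruct Hz as [u [<- Hu]]. apply perp_qp; auto; apply Hl; auto. }
    apply (perp_ann A G HP).
    + apply perp_subgroup; auto. apply HJ. apply perp_subgroup; auto.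
    + split. apply (G_add A G HP); auto. apply HJ. apply (G_opp A G HP); auto. apply Ps.
      intros q Hq. rewrite rmulDl, ropp_mul_l, HD by auto. unfold s. rewrite <- thetaQ_mul. apply raddN.
  - apply ringhom_0, f_hom.
  - rewrite (proj1 (f_hom _ _)), IHidealgen1, IHidealgen2. apply radd0.
  - rewrite (ringhom_opp _ f_hom), IHidealgen. apply ropp0.
  - rewrite (proj2 (f_hom _ _)), IHidealgen. apply rmulr0.
  - rewrite (proj2 (f_hom _ _)), IHidealgen. apply rmul0r.
Qed.

Lemma f_rho x y : rho x = rho y -> f x = f y.
Proof.
  intro E. apply rsub_eq0. rewrite <- (ringhom_opp _ f_hom), <- (proj1 (f_hom _ _)).
  apply TJ_f. apply Hker. rewrite rho_add, (ringhom_opp _ Hrho), E. apply raddN.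
Qed.

Definition g (b : B') : A := f (proj1_sig (constructive_indefinite_description _ (Hsurj b))).
Lemma g_rho x : g (rho x) = f x.
Proof.
  unfold g. destruct (constructive_indefinite_description _ _) as [y Hy]. cbn. apply f_rho; auto.
Qed.
Lemma g_hom : ringhom g.
Proof.
  intros b b'. destruct (Hsurj b) as [x <-]. destruct (Hsurj b') as [y <-].
  rewrite <- rho_add, <- rho_mul, !g_rho. apply f_hom.
Qed.
Lemma g_Sg r : G 0 r -> g (Sg r) = r. Proof. intro. unfold Sg. rewrite g_rho. apply f_sig; auto. Qed.
Lemma g_Tq r : G 1 r -> g (Tq r) = r. Proof. intro. unfold Tq. rewrite g_rho. apply f_T; auto. Qed.
Lemma g_Sp r : G (-1) r -> g (Sp r) = r. Proof. intro. unfold Sp. rewrite g_rho. apply f_S; auto. Qed.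


Inductive term := tS0 (r : A) | tT (q : A) (qs : list A) | tP (p : A) (ps : list A).

Definition img (c : term) : B' :=
  match c with tS0 r => Sg r | tT q qs => rprodne (map Tq (q :: qs)) | tP p ps => rprodne (map Sp (p :: ps)) end.
Definition wf (c : term) : Prop :=
  match c with tS0 r => G 0 r | tT q qs => G 1 q /\ Forall (G 1) qs | tP p ps => G (-1) p /\ Forall (G (-1)) ps end.
Definition val (c : term) : A :=
  match c with tS0 r => r | tT q qs => rprodne (q :: qs) | tP p ps => rprodne (p :: ps) end.
Definition deg (c : term) : Z :=
  match c with tS0 _ => 0 | tT _ qs => Z.of_nat (S (length qs)) | tP _ ps => - Z.of_nat (S (length ps)) end.

Lemma val_wf c : wf c -> G (deg c) (val c).
Proof.
  destruct c as [r|q qs|p ps]; cbn [wf val deg]; intro H. auto.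
  - replace (Z.of_nat (S (length qs))) with (1 * Z.of_nat (length (q :: qs))) by (cbn; lia).
    apply (rprodne_G A G HP); auto. constructor; apply H. discriminate.
  - replace (- Z.of_nat (S (length ps))) with (-1 * Z.of_nat (length (p :: ps))) by (cbn; lia).
    apply (rprodne_G A G HP); auto. constructor; apply H. discriminate.
Qed.

Lemma g_img c : wf c -> g (img c) = val c.
Proof.
  destruct c as [r|q qs|p ps]; cbn [wf img val]; intro H. apply g_Sg; auto.
  - destruct H as [Hq F]. revert q Hq. induction F as [|q' qs Hq' F IH]; intros q Hq. cbn. apply g_Tq; auto.
    change (g (rmul (Tq q) (rprodne (map Tq (q' :: qs)))) = rmul q (rprodne (q' :: qs))).
    rewrite (proj2 (g_hom _ _)), g_Tq, IH; auto.
  - destruct H as [Hq F]. revert p Hq. induction F as [|q' qs Hq' F IH]; intros q Hq. cbn. apply g_Sp; auto.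
    change (g (rmul (Sp q) (rprodne (map Sp (q' :: qs)))) = rmul q (rprodne (q' :: qs))).
    rewrite (proj2 (g_hom _ _)), g_Sp, IH; auto.
Qed.

Lemma SgT r q qs : G 0 r -> G 1 q -> img (tT (rmul r q) qs) = rmul (Sg r) (img (tT q qs)).
Proof.
  intros. destruct qs as [|q' qs]; cbn [img map rprodne]. rewrite SgTq; auto.
  rewrite rmulA, SgTq; auto.
Qed.
Lemma SgP r p ps : G 0 r -> G (-1) p -> img (tP (rmul r p) ps) = rmul (Sg r) (img (tP p ps)).
Proof.
  intros. destruct ps as [|p' ps]; cbn [img map rprodne]. rewrite SgSp; auto.
  rewrite rmulA, SgSp; auto.
Qed.

Definition NT (b : B') := exists c, wf c /\ img c = b.

Lemma L_Sg r c : G 0 r -> wf c -> NT (rmul (Sg r) (img c)).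
Proof.
  intros Hr Hc. destruct c as [r'|q qs|p ps]; cbn in Hc.
  - exists (tS0 (rmul r r')). split. cbn. (eapply G_mul; eauto; try lia). cbn. apply Sg_mul; auto.
  - destruct Hc as [Hq F]. exists (tT (rmul r q) qs). split. cbn. split; auto. (eapply G_mul; eauto; try lia). apply SgT; auto.
  - destruct Hc as [Hq F]. exists (tP (rmul r p) ps). split. cbn. split; auto. (eapply G_mul; eauto; try lia). apply SgP; auto.
Qed.

Lemma L_Tq q c : G 1 q -> wf c -> NT (rmul (Tq q) (img c)).
Proof.
  intros Hq Hc. destruct c as [r|q' qs|p ps]; cbn in Hc.
  - exists (tT (rmul q r) []). split. cbn. split. (eapply G_mul; eauto; try lia). constructor. cbn. symmetry. apply TqSg; auto.
  - exists (tT q (q' :: qs)). split. cbn. split; auto. constructor; apply Hc. reflexivity.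
  - destruct Hc as [Hp F]. destruct ps as [|p' ps].
    + exists (tS0 (rmul q p)). split. cbn. (eapply G_mul; eauto; try lia). cbn. symmetry. apply TqSp; auto.
    + inversion F; subst. exists (tP (rmul (rmul q p) p') ps). split. cbn. split; auto.
      apply (G_mul A G HP 0 (-1) (-1)); [apply (G_mul A G HP 1 (-1) 0)|..]; auto; lia.
      rewrite SgP; auto. cbn [img map rprodne]. rewrite rmulA, TqSp; auto. (eapply G_mul; eauto; try lia).
Qed.

Lemma L_Sp p c : G (-1) p -> wf c -> NT (rmul (Sp p) (img c)).
Proof.
  intros Hp Hc. destruct c as [r|q qs|p' ps]; cbn in Hc.
  - exists (tP (rmul p r) []). split. cbn. split. (eapply G_mul; eauto; try lia). constructor. cbn. symmetry. apply SpSg; auto.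
  - destruct Hc as [Hq F]. destruct qs as [|q' qs].
    + exists (tS0 (rmul p q)). split. cbn. (eapply G_mul; eauto; try lia). cbn. symmetry. apply SpTq; auto.
    + inversion F; subst. exists (tT (rmul (rmul p q) q') qs). split. cbn. split; auto.
      apply (G_mul A G HP 0 1 1); [apply (G_mul A G HP (-1) 1 0)|..]; auto; lia.
      rewrite SgT; auto. cbn [img map rprodne]. rewrite rmulA, SpTq; auto. (eapply G_mul; eauto; try lia).
  - exists (tP p (p' :: ps)). split. cbn. split; auto. constructor; apply Hc. reflexivity.
Qed.

Lemma term_mul c1 c2 : wf c1 -> wf c2 -> NT (rmul (img c1) (img c2)).
Proof.
  intros H1 H2. destruct c1 as [r|q qs|p ps]; cbn in H1.
  - apply L_Sg; auto.
  - destruct H1 as [Hq F]. revert q Hq. induction F as [|q' qs Hq' F IH]; intros q Hq.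
    + apply L_Tq; auto.
    + change (NT (rmul (rmul (Tq q) (img (tT q' qs))) (img c2))). rewrite <- rmulA.
      destruct (IH q' Hq') as [c [Hc E]]. rewrite <- E. apply L_Tq; auto.
  - destruct H1 as [Hq F]. revert p Hq. induction F as [|q' qs Hq' F IH]; intros q Hq.
    + apply L_Sp; auto.
    + change (NT (rmul (rmul (Sp q) (img (tP q' qs))) (img c2))). rewrite <- rmulA.
      destruct (IH q' Hq') as [c [Hc E]]. rewrite <- E. apply L_Sp; auto.
Qed.

Lemma term_opp c : wf c -> NT (ropp (img c)).
Proof.
  intro H. destruct c as [r|q qs|p ps]; cbn in H.
  - exists (tS0 (ropp r)). split. cbn. apply (G_opp A G HP); auto. cbn. apply Sg_opp; auto.
  - exists (tT (ropp q) qs). split. cbn. split. apply (G_opp A G HP); auto. apply H. apply H. 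
    destruct qs; cbn [img map rprodne]. apply Tq_opp, H. rewrite Tq_opp, ropp_mul_l; auto. apply H.
  - exists (tP (ropp p) ps). split. cbn. split. apply (G_opp A G HP); auto. apply H. apply H.
    destruct ps; cbn [img map rprodne]. apply Sp_opp, H. rewrite Sp_opp, ropp_mul_l; auto. apply H.
Qed.

Definition NF (b : B') := exists cs, Forall wf cs /\ b = rsum (map img cs).

Lemma NF_NT b : NT b -> NF b.
Proof. intros [c [Hc <-]]. exists [c]. split. auto. cbn. rewrite radd0. reflexivity. Qed.
Lemma NF_0 : NF rzero. Proof. exists []. split; auto. Qed.
Lemma NF_add b b' : NF b -> NF b' -> NF (radd b b').
Proof.
  intros [cs [F ->]] [cs' [F' ->]]. exists (cs ++ cs'). split. apply Forall_app; auto.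
  rewrite map_app, rsum_app. reflexivity.
Qed.
Lemma NF_rsum l : Forall NF l -> NF (rsum l).
Proof. intro F. induction F. apply NF_0. apply NF_add; auto. Qed.
Lemma NF_opp b : NF b -> NF (ropp b).
Proof.
  intros [cs [F ->]]. rewrite <- rsum_map_opp. rewrite <- map_map with (f := img) (g := ropp).
  apply NF_rsum. apply Forall_forall. intros x Hx. apply in_map_iff in Hx. destruct Hx as [y [<- Hy]].
  apply in_map_iff in Hy. destruct Hy as [c [<- Hc]].
  rewrite Forall_forall in F. apply NF_NT, term_opp; auto.
Qed.
Lemma NF_mul b b' : NF b -> NF b' -> NF (rmul b b').
Proof.
  intros [cs [F ->]] [cs' [F' ->]]. rewrite rsum_mul_r. apply NF_rsum.
  apply Forall_forall. intros x Hx. apply in_map_iff in Hx. destruct Hx as [y [<- Hy]].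
  apply in_map_iff in Hy. destruct Hy as [c [<- Hc]].
  rewrite rsum_mul_l. apply NF_rsum. apply Forall_forall. intros x Hx. apply in_map_iff in Hx. destruct Hx as [y [<- Hy]].
  apply in_map_iff in Hy. destruct Hy as [c' [<- Hc']]. rewrite Forall_forall in F, F'.
  apply NF_NT, term_mul; auto.
Qed.

Lemma NF_all b : NF b.
Proof.
  destruct (Hsurj b) as [x <-].
  assert (Hg := toeplitz_gen _ _ _ _ (part_system A G HP) t Ht x).
  induction Hg.
  - destruct H as [a [[Ha ->]|[[Ha ->]|[Ha ->]]]].
    + apply NF_NT. exists (tS0 a). split; auto.
    + apply NF_NT. exists (tP a []). split; cbn; auto.
    + apply NF_NT. exists (tT a []). split; cbn; auto.
  - rewrite (ringhom_0 _ Hrho). apply NF_0.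
  - rewrite rho_add. apply NF_add; auto.
  - rewrite (ringhom_opp _ Hrho). apply NF_opp; auto.
  - rewrite rho_mul. apply NF_mul; auto.
Qed.

Lemma img_sum_Sg cs : (forall c, In c cs -> exists r, c = tS0 r /\ G 0 r) ->
  rsum (map img cs) = Sg (rsum (map val cs)).
Proof.
  intros H. rewrite (addmap_rsum Sg (G 0) val cs (Gsub A G HP 0) Sg_add).
  apply rsum_map_ext. intros c Hc. destruct (H c Hc) as [r [-> _]]. reflexivity.
  intros c Hc. destruct (H c Hc) as [r [-> Hr]]. auto.
Qed.

Lemma claimT n : forall cs, (forall c, In c cs -> exists q qs, c = tT q qs /\ length qs = n /\ G 1 q /\ Forall (G 1) qs) ->
  rsum (map val cs) = rzero -> rsum (map img cs) = rzero.
Proof.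
  induction n as [|n IH]; intros cs Hcs Hv.
  - rewrite (rsum_map_ext _ (fun c => Tq (val c))).
    rewrite <- (addmap_rsum Tq (G 1) val cs (Gsub A G HP 1) Tq_add), Hv. apply Tq_0.
    intros c Hc. destruct (Hcs c Hc) as [q [qs [-> [Hl [Hq F]]]]]. destruct qs; [|discriminate]. exact Hq.
    intros c Hc. destruct (Hcs c Hc) as [q [qs [-> [Hl _]]]]. destruct qs; [|discriminate]. reflexivity.
  - set (hd := fun c => match c with tT q _ => q | _ => rzero end).
    destruct (commonQl A G HP (map hd cs)) as [e [He Ee]].
    { intros q Hq. apply in_map_iff in Hq. destruct Hq as [c [<- Hc]]. destruct (Hcs c Hc) as [q [qs [-> [_ [Hq _]]]]]. exact Hq. }
    assert (G0e : G 0 e) by (eapply prodsetG; eauto).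
    set (X := rsum (map img cs)).
    assert (E1 : X = rmul (Sg e) X).
    { unfold X. rewrite rsum_mul_l, map_map. apply rsum_map_ext. intros c Hc.
      destruct (Hcs c Hc) as [q [qs [-> [_ [Hq _]]]]]. rewrite <- SgT; auto. f_equal. f_equal.
      symmetry. apply (Ee (hd (tT q qs))). apply in_map; auto. }
    assert (E2 : forall v, G (-1) v -> rmul (Sp v) X = rzero).
    { intros v Hv'. unfold X. rewrite rsum_mul_l, map_map.
      set (sh := fun c => match c with tT q (q' :: qs) => tT (rmul (rmul v q) q') qs | _ => c end).
      rewrite (rsum_map_ext _ (fun c => img (sh c))).
      2:{ intros c Hc. destruct (Hcs c Hc) as [q [qs [-> [Hl [Hq F]]]]]. destruct qs as [|q' qs]. discriminate.
          inversion F; subst. cbn [sh]. rewrite SgT; auto. change (img (tT q (q' :: qs))) with (rmul (Tq q) (img (tT q' qs))).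
          rewrite rmulA, SpTq; auto. eapply G_mul; eauto. }
      rewrite <- (map_map sh img). apply IH.
      - intros c Hc. apply in_map_iff in Hc. destruct Hc as [c0 [<- Hc0]].
        destruct (Hcs c0 Hc0) as [q [qs [-> [Hl [Hq F]]]]]. destruct qs as [|q' qs]. discriminate.
        inversion F; subst. exists (rmul (rmul v q) q'), qs. cbn in Hl. split. reflexivity. split. lia. split; auto.
        apply (G_mul A G HP 0 1 1); [apply (G_mul A G HP (-1) 1 0)|..]; auto; lia.
      - rewrite map_map. rewrite (rsum_map_ext _ (fun c => rmul v (val c))).
        rewrite <- map_map with (g := rmul v), <- rsum_mul_l, Hv. apply rmulr0.
        intros c Hc. destruct (Hcs c Hc) as [q [qs [-> [Hl [Hq F]]]]]. destruct qs as [|q' qs]. discriminate.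
        cbn [sh val]. rewrite rprodne_cons_mul. change (rprodne (q :: q' :: qs)) with (rmul q (rprodne (q' :: qs))). symmetry. apply rmulA. }
    rewrite E1. destruct (prodset_list _ _ _ (Gsub A G HP 1) He) as [l [Hl ->]].
    rewrite (addmap_rsum Sg (G 0) (fun t => rmul (fst t) (snd t)) l (Gsub A G HP 0) Sg_add).
    rewrite rsum_mul_r, map_map. apply rsum_map_zero. intros u Hu. destruct (Hl u Hu).
    rewrite <- TqSp, <- rmulA, E2, rmulr0; auto.
    intros u Hu. destruct (Hl u Hu). eapply G_mul; eauto.
Qed.

Lemma claimP n : forall cs, (forall c, In c cs -> exists p ps, c = tP p ps /\ length ps = n /\ G (-1) p /\ Forall (G (-1)) ps) ->
  rsum (map val cs) = rzero -> rsum (map img cs) = rzero.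
Proof.
  induction n as [|n IH]; intros cs Hcs Hv.
  - rewrite (rsum_map_ext _ (fun c => Sp (val c))).
    rewrite <- (addmap_rsum Sp (G (-1)) val cs (Gsub A G HP (-1)) Sp_add), Hv. apply Sp_0.
    intros c Hc. destruct (Hcs c Hc) as [q [qs [-> [Hl [Hq F]]]]]. destruct qs; [|discriminate]. exact Hq.
    intros c Hc. destruct (Hcs c Hc) as [q [qs [-> [Hl _]]]]. destruct qs; [|discriminate]. reflexivity.
  - set (hd := fun c => match c with tP q _ => q | _ => rzero end).
    destruct (commonPl A G HP (map hd cs)) as [e [He Ee]].
    { intros q Hq. apply in_map_iff in Hq. destruct Hq as [c [<- Hc]]. destruct (Hcs c Hc) as [q [qs [-> [_ [Hq _]]]]]. exact Hq. }
    assert (G0e : G 0 e) by (eapply prodsetG; eauto).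
    set (X := rsum (map img cs)).
    assert (E1 : X = rmul (Sg e) X).
    { unfold X. rewrite rsum_mul_l, map_map. apply rsum_map_ext. intros c Hc.
      destruct (Hcs c Hc) as [q [qs [-> [_ [Hq _]]]]]. rewrite <- SgP; auto. f_equal. f_equal.
      symmetry. apply (Ee (hd (tP q qs))). apply in_map; auto. }
    assert (E2 : forall v, G 1 v -> rmul (Tq v) X = rzero).
    { intros v Hv'. unfold X. rewrite rsum_mul_l, map_map.
      set (sh := fun c => match c with tP q (q' :: qs) => tP (rmul (rmul v q) q') qs | _ => c end).
      rewrite (rsum_map_ext _ (fun c => img (sh c))).
      2:{ intros c Hc. destruct (Hcs c Hc) as [q [qs [-> [Hl [Hq F]]]]]. destruct qs as [|q' qs]. discriminate.
          inversion F; subst. cbn [sh]. rewrite SgP; auto. change (img (tP q (q' :: qs))) with (rmul (Sp q) (img (tP q' qs))).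
          rewrite rmulA, TqSp; auto. eapply G_mul; eauto. }
      rewrite <- (map_map sh img). apply IH.
      - intros c Hc. apply in_map_iff in Hc. destruct Hc as [c0 [<- Hc0]].
        destruct (Hcs c0 Hc0) as [q [qs [-> [Hl [Hq F]]]]]. destruct qs as [|q' qs]. discriminate.
        inversion F; subst. exists (rmul (rmul v q) q'), qs. cbn in Hl. split. reflexivity. split. lia. split; auto.
        apply (G_mul A G HP 0 (-1) (-1)); [apply (G_mul A G HP 1 (-1) 0)|..]; auto; lia.
      - rewrite map_map. rewrite (rsum_map_ext _ (fun c => rmul v (val c))).
        rewrite <- map_map with (g := rmul v), <- rsum_mul_l, Hv. apply rmulr0.
        intros c Hc. destruct (Hcs c Hc) as [q [qs [-> [Hl [Hq F]]]]]. destruct qs as [|q' qs]. discriminate.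
        cbn [sh val]. rewrite rprodne_cons_mul. change (rprodne (q :: q' :: qs)) with (rmul q (rprodne (q' :: qs))). symmetry. apply rmulA. }
    rewrite E1. destruct (prodset_list _ _ _ (Gsub A G HP (-1)) He) as [l [Hl ->]].
    rewrite (addmap_rsum Sg (G 0) (fun t => rmul (fst t) (snd t)) l (Gsub A G HP 0) Sg_add).
    rewrite rsum_mul_r, map_map. apply rsum_map_zero. intros u Hu. destruct (Hl u Hu).
    rewrite <- SpTq, <- rmulA, E2, rmulr0; auto.
    intros u Hu. destruct (Hl u Hu). eapply G_mul; eauto.
Qed.

Lemma per_degree d cs : Forall wf cs -> (forall c, In c cs -> deg c = d) ->
  rsum (map val cs) = rzero -> rsum (map img cs) = rzero.
Proof.
  intros F Hd Hv. rewrite Forall_forall in F.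
  destruct (Z.lt_total d 0) as [Hlt|[Heq|Hgt]].
  - apply (claimP (Z.to_nat (- d) - 1)); auto. intros c Hc. specialize (Hd c Hc). specialize (F c Hc).
    destruct c as [r|q qs|p ps]; cbn in Hd, F. lia. lia. exists p, ps. split; auto. split. lia. auto.
  - subst d. rewrite img_sum_Sg, Hv. apply Sg_0. intros c Hc. specialize (Hd c Hc). specialize (F c Hc).
    destruct c as [r|q qs|p ps]; cbn in Hd, F. eauto. lia. lia.
  - apply (claimT (Z.to_nat d - 1)); auto. intros c Hc. specialize (Hd c Hc). specialize (F c Hc).
    destruct c as [r|q qs|p ps]; cbn in Hd, F. lia. exists q, qs. split; auto. split. lia. auto. lia.
Qed.

Lemma g_inj0 b : g b = rzero -> b = rzero.
Proof.
  intro Hb. destruct (NF_all b) as [cs [F ->]].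
  rewrite (ringhom_rsum _ _ g_hom), map_map in Hb. rewrite Forall_forall in F.
  rewrite (rsum_map_ext _ val) in Hb by (intros; apply g_img; auto).
  set (D := nodup Z.eq_dec (map deg cs)).
  assert (ND : NoDup D) by apply NoDup_nodup.
  assert (HD : forall c, In c cs -> In (deg c) D) by (intros; apply nodup_In, in_map; auto).
  rewrite (group_sum deg img cs D ND HD). rewrite (group_sum deg val cs D ND HD) in Hb.
  destruct (Hgr A G HP) as [_ [_ [_ Hdir]]].
  set (Sd := fun d => rsum (map val (filter (fun c => Z.eqb (deg c) d) cs))).
  set (L := map (fun d => (d, Sd d)) D).
  assert (E1 : map fst L = D) by (unfold L; rewrite map_map; apply map_id).
  assert (E2 : map snd L = map Sd D) by (unfold L; rewrite map_map; reflexivity).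
  assert (Hz : forall d, In d D -> Sd d = rzero).
  { intros d Hd. refine (Hdir L _ _ _ (d, Sd d) _).
    - rewrite E1; auto.
    - intros p Hp. unfold L in Hp. apply in_map_iff in Hp. destruct Hp as [d' [<- Hd']]. cbn.
      apply (G_rsum A G HP). intros x Hx. apply in_map_iff in Hx. destruct Hx as [c [<- Hc]].
      apply filter_In in Hc. destruct Hc as [Hc E]. apply Z.eqb_eq in E. rewrite <- E. apply val_wf; auto.
    - rewrite E2. exact Hb.
    - unfold L. apply in_map_iff. exists d. auto. }
  apply rsum_map_zero. intros d Hd. apply (per_degree d).
  - apply Forall_forall. intros c Hc. apply filter_In in Hc. apply F, Hc.
  - intros c Hc. apply filter_In in Hc. apply Z.eqb_eq, Hc.
  - apply Hz; auto.
Qed.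

Lemma g_inj b b' : g b = g b' -> b = b'.
Proof.
  intro E. apply rsub_eq0. apply g_inj0. rewrite (proj1 (g_hom _ _)), (ringhom_opp _ g_hom), E. apply raddN.
Qed.

Lemma g_surj a : exists b, g b = a.
Proof.
  assert (H := all_gen A G HP (fun a => exists b, g b = a)).
  assert (Hg : forall a, ringgen (fun a => exists b, g b = a) a -> exists b, g b = a).
  { intros a0 Ha0. induction Ha0; auto.
    - exists rzero. apply ringhom_0, g_hom.
    - destruct IHHa0_1 as [b1 <-], IHHa0_2 as [b2 <-]. exists (radd b1 b2). apply g_hom.
    - destruct IHHa0 as [b1 <-]. exists (ropp b1). apply ringhom_opp, g_hom.
    - destruct IHHa0_1 as [b1 <-], IHHa0_2 as [b2 <-]. exists (rmul b1 b2). apply g_hom. }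
  apply Hg, H.
  - intros r Hr. exists (Sg r). apply g_Sg; auto.
  - intros r Hr. exists (Tq r). apply g_Tq; auto.
  - intros r Hr. exists (Sp r). apply g_Sp; auto.
Qed.

Definition h (a : A) : B' := proj1_sig (constructive_indefinite_description _ (g_surj a)).
Lemma gh a : g (h a) = a.
Proof. unfold h. destruct (constructive_indefinite_description _ _). auto. Qed.
Lemma hg b : h (g b) = b.
Proof. apply g_inj. apply gh. Qed.
Lemma h_hom : ringhom h.
Proof.
  intros a a'. split; apply g_inj; rewrite gh.
  rewrite (proj1 (g_hom _ _)), !gh; auto. rewrite (proj2 (g_hom _ _)), !gh; auto.
Qed.

Lemma f_rprodne (k : A -> rB t) (l : list A) : f (rprodne (map k l)) = rprodne (map (fun x => f (k x)) l).
Proof.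
  induction l as [|x l IH]. apply ringhom_0, f_hom.
  destruct l as [|y l]. reflexivity.
  change (f (rmul (k x) (rprodne (map k (y :: l)))) = rmul (f (k x)) (rprodne (map (fun x => f (k x)) (y :: l)))).
  rewrite (proj2 (f_hom _ _)), IH. reflexivity.
Qed.

Lemma toep_G i x : toep_grading (G 0) (G (-1)) (G 1) t i x -> G i (f x).
Proof.
  intro H. induction H.
  - destruct H as [m [n [u [v [Ei [Hu [Hv Hx]]]]]]].
    assert (Gu : G (Z.of_nat m) (f u)).
    { destruct Hu as [[-> [r [Hr ->]]]|[Hm [xs [Hl [F ->]]]]]. rewrite f_sig; auto.
      rewrite f_rprodne. rewrite (map_ext_in _ (fun y => y)), map_id.
      replace (Z.of_nat m) with (1 * Z.of_nat (length xs)) by lia. apply (rprodne_G A G HP); auto.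
      intro E; subst; cbn in Hm; lia. intros y Hy. apply f_T. rewrite Forall_forall in F; auto. }
    assert (Gv : G (- Z.of_nat n) (f v)).
    { destruct Hv as [[-> [r [Hr ->]]]|[Hm [xs [Hl [F ->]]]]]. rewrite f_sig; auto.
      rewrite f_rprodne. rewrite (map_ext_in _ (fun y => y)), map_id.
      replace (- Z.of_nat n) with (-1 * Z.of_nat (length xs)) by lia. apply (rprodne_G A G HP); auto.
      intro E; subst; cbn in Hm; lia. intros y Hy. apply f_S. rewrite Forall_forall in F; auto. }
    destruct Hx as [->|[r [Hr ->]]].
    + rewrite (proj2 (f_hom _ _)). eapply (G_mul A G HP (Z.of_nat m) (- Z.of_nat n)); eauto; lia.
    + rewrite !(proj2 (f_hom _ _)). eapply (G_mul A G HP 0 (Z.of_nat m - Z.of_nat n)). rewrite f_sig; eauto. eapply (G_mul A G HP (Z.of_nat m) (- Z.of_nat n)); eauto; lia. lia.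
  - rewrite ringhom_0 by apply f_hom. apply (G_0 A G HP).
  - rewrite (proj1 (f_hom _ _)). apply (G_add A G HP); auto.
  - rewrite ringhom_opp by apply f_hom. apply (G_opp A G HP); auto.
Qed.

Lemma G_toep i a : G i a -> exists x, toep_grading (G 0) (G (-1)) (G 1) t i x /\ f x = a.
Proof.
  intro Ha. destruct (nes A G HP i a Ha) as [c [b [Hc [Hb [Ec Eb]]]]].
  assert (Gc : G 0 c) by (eapply prodsetG; eauto; lia).
  assert (Gb : G 0 b) by (eapply prodsetG; eauto; lia).
  destruct i as [|p|p].
  - exists (rmul (rsig t c) (rsig t a)). split.
    + apply ag_in. exists 0%nat, 0%nat, (rsig t c), (rsig t a). split. reflexivity.
      split. left. split; eauto. split. left. split; eauto. left; auto.
    + rewrite (proj2 (f_hom _ _)), !f_sig; auto.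
  - set (k := Pos.to_nat p). assert (E : Z.pos p = Z.of_nat k) by (unfold k; lia). rewrite E in Ha.
    apply (ss A G HP k ltac:(unfold k; lia) a) in Ha.
    apply pws_list in Ha; [|apply Gsub; auto|unfold k; lia]. destruct Ha as [L [HL HaL]].
    exists (rsum (map (fun l => rmul (rprodne (map (rT t) l)) (rsig t b)) L)). split.
    + apply subgroup_rsum. apply addgen_subgroup. intros y Hy. apply in_map_iff in Hy. destruct Hy as [l [<- Hl]].
      destruct (HL l Hl) as [Hlen F]. apply ag_in. exists k, 0%nat, (rprodne (map (rT t) l)), (rsig t b). split. lia.
      split. right. split. unfold k; lia. exists l. auto. split. left. split; eauto. left; auto.
    + rewrite (ringhom_rsum _ _ f_hom), map_map. rewrite <- Eb, HaL, rsum_mul_r, map_map.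
      apply rsum_map_ext. intros l Hl. destruct (HL l Hl) as [Hlen F].
      rewrite (proj2 (f_hom _ _)), f_sig, f_rprodne by auto. f_equal.
      rewrite (map_ext_in _ (fun y => y)), map_id; auto. intros y Hy. apply f_T. rewrite Forall_forall in F; auto.
  - set (k := Pos.to_nat p). assert (E : Z.neg p = - Z.of_nat k) by (unfold k; lia). rewrite E in Ha.
    apply (ss A G HP k ltac:(unfold k; lia) a) in Ha.
    apply pws_list in Ha; [|apply Gsub; auto|unfold k; lia]. destruct Ha as [L [HL HaL]].
    exists (rsum (map (fun l => rmul (rsig t c) (rprodne (map (rS t) l))) L)). split.
    + apply subgroup_rsum. apply addgen_subgroup. intros y Hy. apply in_map_iff in Hy. destruct Hy as [l [<- Hl]].
      destruct (HL l Hl) as [Hlen F]. apply ag_in. exists 0%nat, k, (rsig t c), (rprodne (map (rS t) l)). split. lia.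
      split. left. split; eauto. split. right. split. unfold k; lia. exists l. auto. left; auto.
    + rewrite (ringhom_rsum _ _ f_hom), map_map. rewrite <- Ec, HaL, rsum_mul_l, map_map.
      apply rsum_map_ext. intros l Hl. destruct (HL l Hl) as [Hlen F].
      rewrite (proj2 (f_hom _ _)), f_sig, f_rprodne by auto. f_equal.
      rewrite (map_ext_in _ (fun y => y)), map_id; auto. intros y Hy. apply f_S. rewrite Forall_forall in F; auto.
Qed.

Lemma iso_main :
  rep_iso (G 0) (G (-1)) (G 1) (incl_rep A) (quot_rep t B' rho) /\
  graded_iso A B' G (fun i o => exists x, toep_grading (G 0) (G (-1)) (G 1) t i x /\ o = rho x).
Proof.
  split.
  - exists h, g. split; [|split; [|split]].
    + split. apply h_hom. cbn. split; [|split]; intros a Ha; rewrite <- hg; f_equal.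
      symmetry; apply g_Sp; auto. symmetry; apply g_Tq; auto. symmetry; apply g_Sg; auto.
    + split. apply g_hom. cbn. split; [|split]; intros a Ha. apply g_Sp; auto. apply g_Tq; auto. apply g_Sg; auto.
    + apply gh.
    + apply hg.
  - exists h, g. split. apply h_hom. split. apply g_hom. split. apply gh. split. apply hg.
    intros i a. split.
    + intro Ha. destruct (G_toep i a Ha) as [x [Hx Ex]]. exists x. split; auto.
      apply g_inj. rewrite gh, g_rho; auto.
    + intros [x [Hx Ex]]. rewrite <- (gh a), Ex, g_rho. apply toep_G; auto.
Qed.

End Iso.

Theorem mainTheorem14 (A : nuring) (G : Z -> A -> Prop) :
  pre_CP A G ->
  (* (A_{-1}, A_1, psi) with psi(a (x) b) = ab is an s-unital A_0-system with (FS) *)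
  is_system (G 0) (G (-1)) (G 1) rmul /\
  s_unital_system (G 0) (G (-1)) (G 1) /\
  cond_FS (G (-1)) (G 1) rmul /\
  (* the inclusion tuple is a surjective (graded) covariant representation *)
  is_covrep (G 0) (G (-1)) (G 1) rmul (incl_rep A) /\
  rep_surjective (G 0) (G (-1)) (G 1) (incl_rep A) /\
  rep_graded (G 0) (G (-1)) (G 1) (incl_rep A) G /\
  (* it is semi-full *)
  semi_full (G 0) (G (-1)) (G 1) rmul (incl_rep A) G /\
  (* the Cuntz-Pimsner ring is well-defined: a unique maximal psi-compatible
     faithful ideal J exists, and for O = T / T(J) (any Toeplitz representation T,
     any surjective ring map rho : T -> B' with kernel T(J)) *)
  exists J : A -> Prop,
    unique_maximal_good_ideal (G 0) (G (-1)) (G 1) rmul J /\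
    forall (t : rep A), is_toeplitz (G 0) (G (-1)) (G 1) rmul t ->
    forall (B' : nuring) (rho : rB t -> B'),
      ringhom rho -> (forall b : B', exists x, rho x = b) ->
      (forall x, rho x = rzero <-> TJ (G (-1)) (G 1) rmul J t x) ->
      rep_iso (G 0) (G (-1)) (G 1) (incl_rep A) (quot_rep t B' rho) /\
      graded_iso A B' G
        (fun i o => exists x, toep_grading (G 0) (G (-1)) (G 1) t i x /\ o = rho x).
Proof.
  intro HP.
  split. apply part_system; auto.
  split. apply part_sunital; auto.
  split. apply part_FS; auto.
  split. apply part_covrep.
  split. apply part_surj; auto.
  split. apply part_graded; auto.
  split. apply part_semifull; auto.
  exists (Jmax A G). split. apply Jmax_unique; auto.
  intros t Ht B' rho Hrho Hs Hk.
  destruct ((proj2 Ht) (incl_rep A) (part_covrep A G)) as [[f Hf] _].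
  eapply iso_main; eauto.
Qed.
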